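(* Let $I$ be a finite set and $T$ a tree on $I$. The lattice $[\hat{0},T]$ (an interval of $\operatorname{For}(I)$) is supersolvable.
   Context: A tree on a finite set $I$ is a (non-planar) rooted binary tree whose leaves are bijectively labeled by $I$: vertices are inner vertices (valence $3$) and leaves and the root (valence $1$), edges oriented towards the root; one-leaf trees are allowed. A forest on $I$ is a set of trees whose leaf sets partition $I$. For forests $F,G$ on $I$, $F \leq G$ if there is a continuous map $F\to G$ which (D1) is increasing with respect to orientation towards the root, (D2) maps inner vertices to inner vertices injectively, (D3) is the identity of $I$ on leaves, (D4) is injective on each tree of $F$. This gives the poset $\operatorname{For}(I)$, with minimum $\hat{0}$ (no inner vertices); $[\hat{0},T]$ is a lattice. A finite lattice is supersolvable if it contains a maximal chain which, together with any other chain of the lattice, generates a distributive sublattice. *)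

(* Defs.v *)
From mathcomp Require Import all_boot.
Set Implicit Arguments. Unset Strict Implicit. Unset Printing Implicit Defensive.

(* A vertex v of a forest (leaf or inner vertex; roots are not recorded) is *)
(* encoded by the set of leaves lying below v.  A non-planar rooted binary  *)
(* forest with leaves labelled bijectively by I is the same thing as a set  *)
(* F of nonempty subsets of I which contains all singletons (the leaves),   *)
(* is laminar, and in which every cluster of size >= 2 (inner vertex) is    *)
(* the disjoint union of exactly two maximal proper sub-clusters (its two   *)
(* children).  The trees of F are its maximal clusters.                     *)
Section Forests.
Variable I : finType.

Definition is_forest (F : {set {set I}}) : Prop :=
  [/\ set0 \notin F,
      (forall i : I, [set i] \in F),
      (forall C D, C \in F -> D \in F ->
         [\/ C \subset D, D \subset C | [disjoint C & D]]) &
      (forall C, C \in F -> 1 < #|C| ->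
         exists C1 C2, [/\ C1 \in F, C2 \in F, C1 :|: C2 = C,
           [disjoint C1 & C2] &
           forall D, D \in F -> D \proper C -> D \subset C1 \/ D \subset C2])].

Definition is_tree (T : {set {set I}}) : Prop := is_forest T /\ setT \in T.

Definition inner (F : {set {set I}}) (C : {set I}) : Prop := C \in F /\ 1 < #|C|.

Definition is_child (F : {set {set I}}) (D C : {set I}) : Prop :=
  [/\ D \in F, C \in F, D \proper C &
      forall E, E \in F -> ~ (D \proper E /\ E \proper C)].

(* F <= G in For(I): there is a map F -> G satisfying (D1)-(D4).  Such a    *)
(* continuous map is determined (up to the position of the images of the    *)
(* roots, which is irrelevant) by its values phi on vertices, edges going to *)
(* the unique increasing path in G between the images of their endpoints.   *)
Definition forest_le (F G : {set {set I}}) : Prop :=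
  exists phi : {set I} -> {set I},
  [/\
      (forall C, C \in F -> phi C \in G),
      (forall i : I, phi [set i] = [set i]),
      (forall C D, C \in F -> D \in F -> C \subset D -> phi C \subset phi D),
      (forall C, inner F C -> inner G (phi C)) /\
      (forall C D, inner F C -> inner F D -> phi C = phi D -> C = D) &
      (* (D4) injective on each tree: the images of the two edges below an  *)
      (* inner vertex are nontrivial and leave phi C in distinct directions, *)
      (* i.e. phi C is the least vertex of G above both children images.    *)
      (forall C C1 C2, is_child F C1 C -> is_child F C2 C -> C1 <> C2 ->
         [/\ phi C1 \proper phi C, phi C2 \proper phi C &
             forall E, E \in G -> phi C1 :|: phi C2 \subset E ->
               phi C \subset E])].

Definition forest0 : {set {set I}} := [set [set i] | i : I].

Definition interval0 (T : {set {set I}}) (F : {set {set I}}) : Prop :=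
  [/\ is_forest F, forest_le forest0 F & forest_le F T].

End Forests.

Section Lattices.
Variables (X : Type) (D : X -> Prop) (le : X -> X -> Prop).

Definition is_join (x y z : X) : Prop :=
  [/\ D z, le x z, le y z & forall w, D w -> le x w -> le y w -> le z w].

Definition is_meet (x y z : X) : Prop :=
  [/\ D z, le z x, le z y & forall w, D w -> le w x -> le w y -> le w z].

Definition is_lattice : Prop :=
  [/\ (forall x, D x -> le x x),
      (forall x y, D x -> D y -> le x y -> le y x -> x = y),
      (forall x y z, D x -> D y -> D z -> le x y -> le y z -> le x z),
      (forall x y, D x -> D y -> exists z, is_join x y z) &
      (forall x y, D x -> D y -> exists z, is_meet x y z)].

Definition lat_closed (S : X -> Prop) : Prop :=
  (forall x, S x -> D x) /\
  (forall x y z, S x -> S y -> is_join x y z \/ is_meet x y z -> S z).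

Definition generated (S : X -> Prop) (x : X) : Prop :=
  forall S', lat_closed S' -> (forall y, S y -> S' y) -> S' x.

Definition distributive_on (S : X -> Prop) : Prop :=
  forall x y z yz r1 xy xz r2, S x -> S y -> S z ->
    is_join y z yz -> is_meet x yz r1 ->
    is_meet x y xy -> is_meet x z xz -> is_join xy xz r2 -> r1 = r2.

Definition is_chain (K : X -> Prop) : Prop :=
  (forall x, K x -> D x) /\ (forall x y, K x -> K y -> le x y \/ le y x).

Definition maximal_chain (M : X -> Prop) : Prop :=
  is_chain M /\
  forall K, is_chain K -> (forall x, M x -> K x) -> forall x, K x -> M x.

Definition supersolvable : Prop :=
  is_lattice /\
  exists M, maximal_chain M /\
    forall K, is_chain K -> distributive_on (generated (fun x => M x \/ K x)).

End Lattices.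

(* Main.v *)
Require Import Defs.
From mathcomp Require Import all_boot.
From Stdlib Require Import ClassicalEpsilon Classical.
Set Implicit Arguments. Unset Strict Implicit. Unset Printing Implicit Defensive.

Section Abs.
Variables (X : Type) (D : X -> Prop) (le : X -> X -> Prop).
Hypothesis lerefl : forall x, D x -> le x x.
Hypothesis leanti : forall x y, D x -> D y -> le x y -> le y x -> x = y.
Hypothesis letr : forall x y z, D x -> D y -> D z -> le x y -> le y z -> le x z.
Variables jn mt : X -> X -> X.
Hypothesis hjn : forall x y, D x -> D y -> is_join D le x y (jn x y).
Hypothesis hmt : forall x y, D x -> D y -> is_meet D le x y (mt x y).

Lemma jnD x y : D x -> D y -> D (jn x y). Proof. by move=> a b; case: (hjn a b). Qed.
Lemma mtD x y : D x -> D y -> D (mt x y). Proof. by move=> a b; case: (hmt a b). Qed.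
Hint Resolve jnD mtD : core.
Lemma jnl x y : D x -> D y -> le x (jn x y). Proof. by move=> a b; case: (hjn a b). Qed.
Lemma jnr x y : D x -> D y -> le y (jn x y). Proof. by move=> a b; case: (hjn a b). Qed.
Lemma jnlub x y w : D x -> D y -> D w -> le x w -> le y w -> le (jn x y) w.
Proof. by move=> a b c; case: (hjn a b) => _ _ _; apply. Qed.
Lemma mtl x y : D x -> D y -> le (mt x y) x. Proof. by move=> a b; case: (hmt a b). Qed.
Lemma mtr x y : D x -> D y -> le (mt x y) y. Proof. by move=> a b; case: (hmt a b). Qed.
Lemma mtglb x y w : D x -> D y -> D w -> le w x -> le w y -> le w (mt x y).
Proof. by move=> a b c; case: (hmt a b) => _ _ _; apply. Qed.

Ltac lat := solve [auto | apply: mtl; auto | apply: mtr; auto | apply: jnl; auto | apply: jnr; auto].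
Lemma lt3 y x z : D x -> D y -> D z -> le x y -> le y z -> le x z.
Proof. by move=> *; apply: (@letr x y z). Qed.

Lemma jn_eq x y z : D x -> D y -> is_join D le x y z -> z = jn x y.
Proof.
move=> a b [Dz h1 h2 h3]; apply: leanti; auto.
  by apply: h3; auto; [apply: jnl|apply: jnr].
by apply: jnlub.
Qed.
Lemma mt_eq x y z : D x -> D y -> is_meet D le x y z -> z = mt x y.
Proof.
move=> a b [Dz h1 h2 h3]; apply: leanti; auto.
  by apply: mtglb.
by apply: h3; auto; [apply: mtl|apply: mtr].
Qed.
Lemma mtC x y : D x -> D y -> mt x y = mt y x.
Proof. by move=> a b; apply: leanti; auto; apply: mtglb; auto; solve [apply: mtl; auto|apply: mtr; auto]. Qed.
Lemma jn_le x y : D x -> D y -> le x y -> jn x y = y.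
Proof. move=> a b h; apply: leanti; auto; [apply: jnlub|apply: jnr]; auto. Qed.
Lemma mt_le x y : D x -> D y -> le x y -> mt x y = x.
Proof. move=> a b h; apply: leanti; auto; [apply: mtl|apply: mtglb]; auto. Qed.
Lemma mt_le' x y : D x -> D y -> le y x -> mt x y = y.
Proof. move=> a b h; apply: leanti; auto; [apply: mtr|apply: mtglb]; auto. Qed.
Lemma jn_le' x y : D x -> D y -> le y x -> jn x y = x.
Proof. move=> a b h; apply: leanti; auto; [apply: jnlub|apply: jnl]; auto. Qed.
Lemma mt_mono x y x' y' : D x -> D y -> D x' -> D y' -> le x x' -> le y y' -> le (mt x y) (mt x' y').
Proof.
move=> *; apply: mtglb; auto; [apply: (@lt3 x)|apply: (@lt3 y)]; auto; [apply: mtl|apply: mtr]; auto.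
Qed.
Lemma jn_mono x y x' y' : D x -> D y -> D x' -> D y' -> le x x' -> le y y' -> le (jn x y) (jn x' y').
Proof.
move=> *; apply: jnlub; auto; [apply: (@lt3 x')|apply: (@lt3 y')]; auto; [apply: jnl|apply: jnr]; auto.
Qed.

Variables (m : nat -> X) (r : nat).
Hypothesis Dm : forall i, D (m i).
Hypothesis mbot : forall x, D x -> le (m 0) x.
Hypothesis mtop : forall x, D x -> le x (m r).
Hypothesis mmono : forall i, le (m i) (m i.+1).
Hypothesis mcov : forall i x, i < r -> D x -> le (m i) x -> le x (m i.+1) -> x = m i \/ x = m i.+1.
Hypothesis H1 : forall i y t, i < r -> D y -> D t -> le y (m i) -> le t (m i.+1) ->
  le (mt (m i) (jn y t)) (jn y (mt (m i) t)).
Hypothesis H2 : forall i w z, i < r -> D w -> D z -> le w z -> le z (m i.+1) -> ~ le w (m i) ->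
  le z (jn w (mt z (m i))).
Hint Resolve Dm : core.

Lemma mle i j : i <= j -> le (m i) (m j).
Proof.
elim: j => [|j IH]; first by rewrite leqn0 => /eqP ->; auto.
rewrite leq_eqVlt => /orP [/eqP ->|h]; first by auto.
by apply: (@lt3 (m j)); auto.
Qed.

Section Chain.
Variable K : X -> Prop.
Hypothesis hK : is_chain D le K.

Definition Kx a := K a \/ a = m 0 \/ a = m r.
Lemma KxD a : Kx a -> D a.
Proof. by move=> [ka|[->|->]] //; case: hK => h _; apply: h. Qed.
Lemma Kx_cmp a b : Kx a -> Kx b -> le a b \/ le b a.
Proof.
move=> ha hb; have Da := KxD ha; have Db := KxD hb.
case: ha => [ka|[->|->]]; last 2 first.
- by left; apply: mbot.
- by right; apply: mtop.
case: hb => [kb|[->|->]]; last 2 first.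
- by right; apply: mbot.
- by left; apply: mtop.
by case: hK => _; apply.
Qed.

Definition mxf a b := if excluded_middle_informative (le a b) then b else a.
Definition mnf a b := if excluded_middle_informative (le a b) then a else b.

Section Cmp.
Variables a b : X.
Hypotheses (Da : D a) (Db : D b) (cab : le a b \/ le b a).
Lemma mx_ge_l : le a (mxf a b).
Proof. by rewrite /mxf; destruct (excluded_middle_informative (le a b)) => //; auto. Qed.
Lemma mx_ge_r : le b (mxf a b).
Proof. by rewrite /mxf; destruct (excluded_middle_informative (le a b)) as [h|h] => //; [auto|case: cab]. Qed.
Lemma mx_or : mxf a b = a \/ mxf a b = b.
Proof. by rewrite /mxf; destruct (excluded_middle_informative (le a b)); auto. Qed.
Lemma mn_le_l : le (mnf a b) a.
Proof. by rewrite /mnf; destruct (excluded_middle_informative (le a b)) as [h|h] => //; [auto|case: cab]. Qed.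
Lemma mn_le_r : le (mnf a b) b.
Proof. by rewrite /mnf; destruct (excluded_middle_informative (le a b)) => //; auto. Qed.
Lemma mn_or : mnf a b = a \/ mnf a b = b.
Proof. by rewrite /mnf; destruct (excluded_middle_informative (le a b)); auto. Qed.
Lemma mxD : D (mxf a b). Proof. by case: mx_or => ->. Qed.
Lemma mnD : D (mnf a b). Proof. by case: mn_or => ->. Qed.
Lemma mx_lub s : D s -> le a s -> le b s -> le (mxf a b) s.
Proof. by move=> *; case: mx_or => ->. Qed.
Lemma mn_glb s : D s -> le s a -> le s b -> le s (mnf a b).
Proof. by move=> *; case: mn_or => ->. Qed.
End Cmp.

Lemma Kx_mx a b : Kx a -> Kx b -> Kx (mxf a b).
Proof. by rewrite /mxf; case: (excluded_middle_informative (le a b)). Qed.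
Lemma Kx_mn a b : Kx a -> Kx b -> Kx (mnf a b).
Proof. by rewrite /mnf; case: (excluded_middle_informative (le a b)). Qed.

Definition valid (u : nat -> X) := (forall i, Kx (u i)) /\ (forall i j, i <= j -> le (u j) (u i)).

Fixpoint Fu (u : nat -> X) (i : nat) : X :=
  match i with 0 => mt (m 0) (u 0) | i'.+1 => jn (Fu u i') (mt (m i'.+1) (u i'.+1)) end.

Lemma FuD u i : (forall j, D (u j)) -> D (Fu u i).
Proof. by move=> h; elim: i => [|i IH] /=; auto. Qed.
Hint Resolve FuD : core.

Lemma Fu_le_m u i : (forall j, D (u j)) -> le (Fu u i) (m i).
Proof.
move=> h; elim: i => [|i IH] /=; first by apply: mtl.
apply: jnlub; auto; last by apply: mtl.
by apply: (@lt3 (m i)); auto; apply: FuD.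
Qed.

Lemma Fu_ge u i : (forall j, D (u j)) -> le (mt (m i) (u i)) (Fu u i).
Proof. by move=> h; case: i => [|i] /=; [apply: lerefl|apply: jnr]; auto; apply: FuD. Qed.

Lemma Fu_ext u v i : (forall j, u j = v j) -> Fu u i = Fu v i.
Proof. by move=> h; elim: i => [|i IH] /=; rewrite ?IH h. Qed.

Lemma Fu0 u : D (u 0) -> Fu u 0 = m 0.
Proof. by move=> h /=; apply: mt_le; auto. Qed.

Lemma core_ineq i P Q p q : i < r -> D P -> D Q -> D p -> D q ->
  le P (m i) -> le Q (m i) -> le p (m i.+1) -> le q (m i.+1) -> le p q ->
  le (mt (m i) p) P -> le (mt (m i) q) Q ->
  le (mt (jn P p) (jn Q q)) (jn (mt P Q) p).
Proof.
move=> ir DP DQ Dp Dq hP hQ hp hq hpq hp' hq'.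
have hQq : le (mt (m i) (jn Q q)) Q.
  apply: (@lt3 (jn Q (mt (m i) q))); auto; try solve [apply: H1; auto].
  by apply: jnlub; auto.
have hPp : le (mt (m i) (jn P p)) P.
  apply: (@lt3 (jn P (mt (m i) p))); auto; try solve [apply: H1; auto].
  by apply: jnlub; auto.
case: (classic (le p (m i))) => hpm.
- have pP : le p P by apply: (@lt3 (mt (m i) p)); auto; apply: mtglb; auto.
  rewrite (jn_le' DP Dp pP).
  apply: (@lt3 (mt P Q)); auto; last by apply: jnl; auto.
  apply: mtglb; auto; try solve [apply: mtl; auto].
  apply: (@lt3 (mt (m i) (jn Q q))); auto.
  by apply: mt_mono; auto.
- set w := jn (mt P Q) p; set z := mt (jn P p) (jn Q q).
  have Dw : D w by rewrite /w; auto.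
  have Dz : D z by rewrite /z; auto.
  have wz : le w z.
    apply: jnlub; auto; apply: mtglb; auto.
    + apply: (@lt3 P); auto; [apply: mtl|apply: jnl]; auto.
    + apply: (@lt3 Q); auto; [apply: mtr|apply: jnl]; auto.
    + by apply: jnr.
    + apply: (@lt3 q); auto; apply: jnr; auto.
  have zm : le z (m i.+1).
    apply: (@lt3 (jn P p)); auto; try solve [apply: mtl; auto].
    apply: jnlub; auto; apply: (@lt3 (m i)); auto.
  have nw : ~ le w (m i).
    move=> h; apply: hpm; apply: (@lt3 w); auto; apply: jnr; auto.
  apply: (@lt3 (jn w (mt z (m i)))); auto; try solve [apply: H2; auto].
  apply: jnlub; auto.
  apply: (@lt3 (mt P Q)); auto; last by apply: jnl; auto.
  apply: mtglb; auto.
  + apply: (@lt3 (mt (m i) (jn P p))); auto.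
    apply: mtglb; auto; try solve [apply: mtr; auto].
    by apply: (@lt3 z); auto; lat.
  + apply: (@lt3 (mt (m i) (jn Q q))); auto.
    apply: mtglb; auto; try solve [apply: mtr; auto].
    by apply: (@lt3 z); auto; lat.
Qed.

Lemma validD u : valid u -> forall j, D (u j).
Proof. by case=> h _ j; apply: KxD. Qed.

Lemma antiv u i j : valid u -> i <= j -> le (u j) (u i).
Proof. by case=> _ h; apply: h. Qed.

Lemma valid_mx u v : valid u -> valid v -> valid (fun j => mxf (u j) (v j)).
Proof.
move=> hu hv; split; first by move=> j; apply: Kx_mx; [case: hu|case: hv] => h _; apply: h.
move=> i j hij.
have Du : forall j, D (u j) by move=> k; case: hu => h _; apply: KxD.
have Dv : forall j, D (v j) by move=> k; case: hv => h _; apply: KxD.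
have cj : le (u j) (v j) \/ le (v j) (u j) by case: hu hv => h _ [h' _]; apply: Kx_cmp.
have ci : le (u i) (v i) \/ le (v i) (u i) by case: hu hv => h _ [h' _]; apply: Kx_cmp.
apply: mx_lub; auto; try (apply: mxD; auto).
- by apply: (@lt3 (u i)); auto; try solve [apply: antiv; eauto | apply: mx_ge_l; auto | apply: mxD; auto].
- by apply: (@lt3 (v i)); auto; try solve [apply: antiv; eauto | apply: mx_ge_r; auto | apply: mxD; auto].
Qed.

Lemma valid_mn u v : valid u -> valid v -> valid (fun j => mnf (u j) (v j)).
Proof.
move=> hu hv; split; first by move=> j; apply: Kx_mn; [case: hu|case: hv] => h _; apply: h.
move=> i j hij.
have Du : forall j, D (u j) by move=> k; case: hu => h _; apply: KxD.
have Dv : forall j, D (v j) by move=> k; case: hv => h _; apply: KxD.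
have cj : le (u j) (v j) \/ le (v j) (u j) by case: hu hv => h _ [h' _]; apply: Kx_cmp.
have ci : le (u i) (v i) \/ le (v i) (u i) by case: hu hv => h _ [h' _]; apply: Kx_cmp.
apply: mn_glb; auto; try (apply: mnD; auto).
- by apply: (@lt3 (u j)); auto; try solve [apply: antiv; eauto | apply: mn_le_l; auto | apply: mnD; auto].
- by apply: (@lt3 (v j)); auto; try solve [apply: antiv; eauto | apply: mn_le_r; auto | apply: mnD; auto].
Qed.

Lemma Kx_cmp' u v i : valid u -> valid v -> le (u i) (v i) \/ le (v i) (u i).
Proof. by case=> h _ [h' _]; apply: Kx_cmp. Qed.

Lemma Fu_mx u v i : valid u -> valid v ->
  Fu (fun j => mxf (u j) (v j)) i = jn (Fu u i) (Fu v i).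
Proof.
move=> hu hv; have Du := validD hu; have Dv := validD hv.
have Dw : forall j, D (mxf (u j) (v j)) by move=> j; apply: mxD; auto; apply: Kx_cmp'.
elim: i => [|i IH].
  by rewrite !Fu0 //; rewrite jn_le; auto.
rewrite /= IH.
have c := Kx_cmp' i.+1 hu hv.
set P := Fu u i; set Q := Fu v i; set a := u i.+1; set b := v i.+1; set M := m i.+1.
have DP : D P by apply: FuD.
have DQ : D Q by apply: FuD.
have Da : D a by apply: Du.
have Db : D b by apply: Dv.
have DM : D M by apply: Dm.
have Dab : D (mxf a b) by apply: Dw.
apply: leanti; auto.
- apply: jnlub; auto.
  + apply: jn_mono; auto; lat.
  + case: (mx_or Da Db) => ->.
    * apply: (@lt3 (jn P (mt M a))); auto; lat.
    * apply: (@lt3 (jn Q (mt M b))); auto; lat.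
- apply: jnlub; auto; apply: jnlub; auto.
  + apply: (@lt3 (jn P Q)); auto; lat.
  + apply: (@lt3 (mt M (mxf a b))); auto; try lat.
    by apply: mt_mono; auto; try (apply: lerefl; auto); apply: mx_ge_l; auto.
  + apply: (@lt3 (jn P Q)); auto; lat.
  + apply: (@lt3 (mt M (mxf a b))); auto; try lat.
    by apply: mt_mono; auto; try (apply: lerefl; auto); apply: mx_ge_r; auto.
Qed.

Lemma mn_eq_l a b : le a b -> mnf a b = a.
Proof. by rewrite /mnf; destruct (excluded_middle_informative (le a b)). Qed.
Lemma mn_eq_r a b : ~ le a b -> mnf a b = b.
Proof. by rewrite /mnf; destruct (excluded_middle_informative (le a b)). Qed.

Lemma Fu_mn u v i : valid u -> valid v -> i <= r ->
  Fu (fun j => mnf (u j) (v j)) i = mt (Fu u i) (Fu v i).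
Proof.
move=> hu hv; have Du := validD hu; have Dv := validD hv.
have Dw : forall j, D (mnf (u j) (v j)) by move=> j; apply: mnD; auto; apply: Kx_cmp'.
elim: i => [|i IH] hi.
  by rewrite !Fu0 //; rewrite mt_le; auto.
rewrite /= IH; last by apply: ltnW.
have c := Kx_cmp' i.+1 hu hv.
set P := Fu u i; set Q := Fu v i; set a := u i.+1; set b := v i.+1; set M := m i.+1.
have DP : D P by apply: FuD.
have DQ : D Q by apply: FuD.
have Da : D a by apply: Du.
have Db : D b by apply: Dv.
have DM : D M by apply: Dm.
have Dab : D (mnf a b) by apply: Dw.
have ir : i < r by [].
have hPa : le (mt (m i) (mt M a)) P.
  apply: (@lt3 (mt (m i) (u i))); auto; try solve [apply: Fu_ge; auto].
  apply: mt_mono; auto; try solve [apply: lerefl; auto].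
  apply: (@lt3 a); auto; try lat.
  by case: hu => _; apply.
have hQb : le (mt (m i) (mt M b)) Q.
  apply: (@lt3 (mt (m i) (v i))); auto; try solve [apply: Fu_ge; auto].
  apply: mt_mono; auto; try solve [apply: lerefl; auto].
  apply: (@lt3 b); auto; try lat.
  by case: hv => _; apply.
apply: leanti; auto.
- apply: jnlub; auto.
  + apply: mtglb; auto.
    * apply: (@lt3 P); auto; lat.
    * apply: (@lt3 Q); auto; lat.
  + apply: mtglb; auto.
    * apply: (@lt3 (mt M a)); auto; try lat.
      by apply: mt_mono; auto; try (apply: lerefl; auto); apply: mn_le_l; auto.
    * apply: (@lt3 (mt M b)); auto; try lat.
      by apply: mt_mono; auto; try (apply: lerefl; auto); apply: mn_le_r; auto.
- case: (classic (le a b)) => hab.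
  + rewrite (mn_eq_l hab); apply: (@core_ineq i); auto; try lat; try solve [apply: Fu_le_m; auto].
    by apply: mt_mono; auto; try (apply: lerefl; auto).
  + have hba : le b a by case: c.
    rewrite (mn_eq_r hab) (mtC DP DQ) (mtC (jnD DP (mtD DM Da)) (jnD DQ (mtD DM Db))).
    apply: (@core_ineq i); auto; try lat; try solve [apply: Fu_le_m; auto].
    by apply: mt_mono; auto; try (apply: lerefl; auto).
Qed.

Lemma pt a b c : Kx a -> Kx b -> Kx c ->
  mnf a (mxf b c) = mxf (mnf a b) (mnf a c).
Proof.
move=> ha hb hc.
have Da := KxD ha; have Db := KxD hb; have Dc := KxD hc.
have hbc := Kx_mx hb hc; have hab := Kx_mn ha hb; have hac := Kx_mn ha hc.
have Dbc := KxD hbc; have Dab := KxD hab; have Dac := KxD hac.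
have h1 := Kx_mn ha hbc; have D1 := KxD h1.
have h2 := Kx_mx hab hac; have D2 := KxD h2.
have cab := Kx_cmp ha hb; have cac := Kx_cmp ha hc; have cbc := Kx_cmp hb hc.
have cabc := Kx_cmp ha hbc; have cc := Kx_cmp hab hac.
apply: leanti => //.
- case: (mx_or Db Dc) => e; rewrite e.
  + by apply: mx_ge_l.
  + by apply: mx_ge_r.
- apply: mx_lub => //.
  + apply: mn_glb => //; first by apply: mn_le_l.
    apply: (@lt3 b) => //; [apply: mn_le_r|apply: mx_ge_l] => //.
  + apply: mn_glb => //; first by apply: mn_le_l.
    apply: (@lt3 c) => //; [apply: mn_le_r|apply: mx_ge_r] => //.
Qed.

End Chain.

Theorem abs_ss : supersolvable D le.
Proof.
split.
  split => //.
  - by move=> x y Dx Dy; exists (jn x y); apply: hjn.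
  - by move=> x y Dx Dy; exists (mt x y); apply: hmt.
exists (fun x => exists2 i, i <= r & x = m i); split.
- split.
    split; first by move=> x [i _ ->].
    move=> x y [i _ ->] [j _ ->]; case: (leqP i j) => h.
    + by left; apply: mle.
    + by right; apply: mle; apply: ltnW.
  move=> K [KD Kc] MK x Kx; have Dx := KD x Kx.
  suff H : forall k i, i + k = r -> le (m i) x -> exists2 i, i <= r & x = m i.
    by apply: (H r 0) => //; apply: mbot.
  elim=> [|k IH] i hik hle.
  + rewrite addn0 in hik; subst i; exists r => //.
    by apply: leanti; auto.
  + have ir : i < r by rewrite -hik -addSnnS leq_addr.
    have Mi : K (m i.+1) by apply: MK; exists i.+1.
    case: (Kc (m i.+1) x Mi Kx) => h.
    * by apply: (IH i.+1) => //; rewrite addSnnS.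
    * by case: (mcov ir Dx hle h) => ->; [exists i => //; apply: ltnW|exists i.+1].
- move=> K hK.
  pose Im x := exists2 u, valid K u & x = Fu u r.
  have ImD : forall x, Im x -> D x by move=> x [u hu ->]; apply: FuD; exact: (validD hK hu).
  have latIm : lat_closed D le Im.
    split => // x y z [u hu ->] [v hv ->] [hz|hz].
    + exists (fun j => mxf (u j) (v j)).
      * split; first by move=> j; apply: Kx_mx; [case: hu|case: hv].
        move=> i j hij; have Du := validD hK hu; have Dv := validD hK hv.
        have cj := Kx_cmp' hK j hu hv; have ci := Kx_cmp' hK i hu hv.
        apply: mx_lub; auto; try (apply: mxD; auto).
        -- by apply: (@lt3 (u i)); auto; try solve [apply: antiv; eauto | apply: mx_ge_l; auto | apply: mxD; auto | apply: mnD; auto].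
        -- by apply: (@lt3 (v i)); auto; try solve [apply: antiv; eauto | apply: mx_ge_r; auto | apply: mxD; auto | apply: mnD; auto].
      * by rewrite (Fu_mx hK) //; apply: jn_eq hz; apply: FuD; [exact: (validD hK hu)|exact: (validD hK hv)].
    + exists (fun j => mnf (u j) (v j)).
      * split; first by move=> j; apply: Kx_mn; [case: hu|case: hv].
        move=> i j hij; have Du := validD hK hu; have Dv := validD hK hv.
        have cj := Kx_cmp' hK j hu hv; have ci := Kx_cmp' hK i hu hv.
        apply: mn_glb; auto; try (apply: mnD; auto).
        -- by apply: (@lt3 (u j)); auto; try solve [apply: antiv; eauto | apply: mn_le_l; auto | apply: mxD; auto | apply: mnD; auto].
        -- by apply: (@lt3 (v j)); auto; try solve [apply: antiv; eauto | apply: mn_le_r; auto | apply: mxD; auto | apply: mnD; auto].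
      * by rewrite (Fu_mn hK) //; apply: mt_eq hz; apply: FuD; [exact: (validD hK hu)|exact: (validD hK hv)].
  have sub : forall x, (exists2 i, i <= r & x = m i) \/ K x -> Im x.
    move=> x [[j hj ->]|Kx].
    + exists (fun i => if i <= j then m r else m 0).
      * split; first by move=> i; case: ifP => _; right; auto.
        move=> i i' hii'; case: ifP => h'.
          by rewrite (leq_trans hii' h'); apply: lerefl.
        by apply: mbot; case: ifP.
      * suff -> : forall i, Fu (fun i => if i <= j then m r else m 0) i = m (minn i j).
          by rewrite (minn_idPr hj).
        elim=> [|i IH].
          have e := (@Fu0 (fun i => if i <= j then m r else m 0)).
          rewrite e; last by rewrite leq0n.
          by rewrite (minn_idPl (leq0n j)).
        rewrite /= IH; case: (leqP i.+1 j) => h.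
        -- rewrite mt_le //; last by apply: mtop.
           by rewrite (minn_idPl (ltnW h)) jn_le; auto.
        -- have hji : j <= i by [].
           rewrite mt_le' //; last by apply: mbot.
           by rewrite (minn_idPr hji) jn_le'; auto.
    + have Dx : D x by case: hK => h _; apply: h.
      exists (fun _ => x).
      * by split => *; [left|apply: lerefl].
      * suff -> : forall i, Fu (fun _ => x) i = mt (m i) x.
          by rewrite mt_le' //; apply: mtop.
        elim=> [|i IH] //=; rewrite IH jn_le //; auto.
        by apply: mt_mono; auto; apply: lerefl.
  have gsub : forall x, generated D le (fun x => (exists2 i, i <= r & x = m i) \/ K x) x -> Im x.
    by move=> x g; apply: g.
  move=> x y z yz r1 xy xz r2 /gsub [u hu ->] /gsub [v hv ->] /gsub [w hw ->] hyz hr1 hxy hxz hr2.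
  have Du := validD hK hu; have Dv := validD hK hv; have Dw := validD hK hw.
  have hvw := valid_mx hK hv hw; have huv := valid_mn hK hu hv; have huw := valid_mn hK hu hw.
  have e1 : yz = Fu (fun j => mxf (v j) (w j)) r.
    by rewrite (Fu_mx hK) //; apply: jn_eq hyz; apply: FuD.
  subst yz.
  have e2 : r1 = Fu (fun j => mnf (u j) (mxf (v j) (w j))) r.
    by rewrite (Fu_mn hK) //; apply: mt_eq hr1; apply: FuD => //; exact: (validD hK hvw).
  have e3 : xy = Fu (fun j => mnf (u j) (v j)) r.
    by rewrite (Fu_mn hK) //; apply: mt_eq hxy; apply: FuD.
  have e4 : xz = Fu (fun j => mnf (u j) (w j)) r.
    by rewrite (Fu_mn hK) //; apply: mt_eq hxz; apply: FuD.
  subst xy xz.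
  have e5 : r2 = Fu (fun j => mxf (mnf (u j) (v j)) (mnf (u j) (w j))) r.
    rewrite (Fu_mx hK _ huv huw); apply: jn_eq hr2; apply: FuD; [exact: (validD hK huv)|exact: (validD hK huw)].
  rewrite e2 e5; apply: Fu_ext => j; apply: (pt hK); [case: hu|case: hv|case: hw] => h _; apply: h.
Qed.

End Abs.


Section Gen.
Variable I : finType.
Implicit Types (F G : {set {set I}}) (C S X Y : {set I}).

Definition hull F S : {set I} := \bigcap_(C in F | S \subset C) C.
Definition sm F (x y : I) : Prop := exists2 C, C \in F & (x \in C) && (y \in C).
Definition splits F C C1 C2 := [/\ C1 \in F, C2 \in F, C1 :|: C2 = C, [disjoint C1 & C2] &
  forall D, D \in F -> D \proper C -> D \subset C1 \/ D \subset C2].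

Lemma hull_sub F S C : C \in F -> S \subset C -> hull F S \subset C.
Proof. by move=> CF SC; apply: bigcap_inf; rewrite CF. Qed.

Lemma sub_hull F S : S \subset hull F S.
Proof. by apply/bigcapsP => C /andP []. Qed.

Lemma hull_mono F S S' : S \subset S' -> hull F S \subset hull F S'.
Proof.
move=> h; apply/bigcapsP => C /andP [CF SC]; apply: hull_sub => //.
exact: subset_trans h SC.
Qed.

Lemma splitsC F C C1 C2 : splits F C C1 C2 -> splits F C C2 C1.
Proof.
case=> h1 h2 h3 h4 h5; split => //; first by rewrite setUC.
  by rewrite disjoint_sym.
by move=> D DF DC; case: (h5 D DF DC); auto.
Qed.

Section Forest.
Variable F : {set {set I}}.
Hypothesis hF : is_forest F.

Lemma f_ne C : C \in F -> exists x, x \in C.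
Proof.
case: hF => h0 _ _ _ CF; case: (set_0Vmem C) => [e|[x xC]]; last by exists x.
by move: h0; rewrite -e CF.
Qed.

Lemma f_one i : [set i] \in F.
Proof. by case: hF. Qed.

Lemma f_lam C D x : C \in F -> D \in F -> x \in C -> x \in D -> C \subset D \/ D \subset C.
Proof.
case: hF => _ _ h _ CF DF xC xD; case: (h C D CF DF) => [|| dis]; auto.
by rewrite (disjointFr dis xC) in xD.
Qed.

Lemma f_split C : C \in F -> 1 < #|C| -> exists C1 C2, splits F C C1 C2.
Proof. by case: hF => _ _ _ h CF c; case: (h C CF c) => C1 [C2 [*]]; exists C1, C2. Qed.

Lemma f_single C : C \in F -> #|C| <= 1 -> exists i, C = [set i].
Proof.
move=> CF c; case: (f_ne CF) => x xC.
have c1 : #|C| == 1 by rewrite eqn_leq c card_gt0; apply/set0Pn; exists x.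
by case/cards1P: c1 => i ->; exists i.
Qed.

Lemma hull_mem S : (exists x, x \in S) -> (exists2 C, C \in F & S \subset C) -> hull F S \in F.
Proof.
move=> [x xS] exC.
have exP : exists n, [exists C in F, (S \subset C) && (#|C| == n)].
  by case: exC => C CF SC; exists #|C|; apply/existsP; exists C; rewrite CF SC eqxx.
case: (ex_minnP exP) => n /existsP [C0 /and3P [C0F SC0 /eqP cn]] hmin.
suff -> : hull F S = C0 by [].
apply/eqP; rewrite eqEsubset hull_sub //=.
apply/bigcapsP => C /andP [CF SC].
have xC0 : x \in C0 by apply: (subsetP SC0).
have xC : x \in C by apply: (subsetP SC).
case: (f_lam C0F CF xC0 xC) => // h.
have : n <= #|C| by apply: hmin; apply/existsP; exists C; rewrite CF SC eqxx.
rewrite -cn => h'.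
have /eqP -> // : C == C0 by rewrite eqEcard h h'.
Qed.

Lemma hull_id C : C \in F -> hull F C = C.
Proof. by move=> CF; apply/eqP; rewrite eqEsubset hull_sub // sub_hull. Qed.

Lemma splits_sub C C1 C2 : splits F C C1 C2 -> C1 \subset C /\ C2 \subset C.
Proof. by case=> _ _ <- _ _; rewrite subsetUl subsetUr. Qed.

Lemma splits_proper C C1 C2 : splits F C C1 C2 -> C1 \proper C.
Proof.
move=> h; have [s1 _] := splits_sub h; case: h => _ C2F e dis _.
rewrite properEneq s1 andbT; apply/eqP => e1.
case: (f_ne C2F) => y yC2.
have : y \in C1 by rewrite e1 -e inE yC2 orbT.
by move=> yC1; rewrite (disjointFr dis yC1) in yC2.
Qed.

Lemma splits_card C C1 C2 : splits F C C1 C2 -> 1 < #|C|.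
Proof.
move=> h; have p := proper_card (splits_proper h).
case: h => C1F _ _ _ _; case: (f_ne C1F) => x xC1.
by apply: (leq_trans _ p); rewrite ltnS card_gt0; apply/set0Pn; exists x.
Qed.

Lemma splits_child C C1 C2 : C \in F -> splits F C C1 C2 -> is_child F C1 C.
Proof.
move=> CF h; have p := splits_proper h; have h' := h.
case: h => C1F C2F e dis hh; split => // E EF [p1 p2].
case: (hh E EF p2) => s.
  by move: (proper_sub_trans p1 s); rewrite properE subxx andbF.
case: (f_ne C1F) => x xC1.
have : x \in C2 by apply: (subsetP s); apply: (subsetP (proper_sub p1)).
by rewrite (disjointFr dis xC1).
Qed.

Lemma child_splits D C C1 C2 : is_child F D C -> splits F C C1 C2 -> D = C1 \/ D = C2.
Proof.
case=> DF CF pDC hmax hs; have hs' := hs.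
case: hs => C1F C2F e dis hh.
have c1 := splits_child CF hs'; have c2 := splits_child CF (splitsC hs').
case: (hh D DF pDC) => s.
- left; apply/eqP; rewrite eqEproper s /=; apply/negP => pr.
  by apply: (hmax C1 C1F); split => //; apply: splits_proper hs'.
- right; apply/eqP; rewrite eqEproper s /=; apply/negP => pr.
  by apply: (hmax C2 C2F); split => //; apply: splits_proper (splitsC hs').
Qed.

Lemma child_card D C : is_child F D C -> 1 < #|C|.
Proof.
case=> DF CF p _; apply: (leq_trans _ (proper_card p)).
by case: (f_ne DF) => x xD; rewrite ltnS card_gt0; apply/set0Pn; exists x.
Qed.

Lemma children_splits C D1 D2 : is_child F D1 C -> is_child F D2 C -> D1 <> D2 -> splits F C D1 D2.
Proof.
move=> c1 c2 ne; have CF : C \in F by case: c1.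
case: (f_split CF (child_card c1)) => C1 [C2 hs].
case: (child_splits c1 hs) => e1; case: (child_splits c2 hs) => e2.
- by exfalso; apply: ne; rewrite e1 e2.
- by rewrite e1 e2.
- by rewrite e1 e2; apply: splitsC.
- by exfalso; apply: ne; rewrite e1 e2.
Qed.

Lemma hull_split C C1 C2 Y : splits F C C1 C2 -> Y \subset C ->
  (exists2 a, a \in Y & a \in C1) -> (exists2 b, b \in Y & b \in C2) -> C \in F -> hull F Y = C.
Proof.
move=> hs YC [a aY aC1] [b bY bC2] CF; have hs' := hs.
case: hs => C1F C2F e dis hh.
have hm : hull F Y \in F by apply: hull_mem; [exists a|exists C].
have hC : hull F Y \subset C by apply: hull_sub.
apply/eqP; rewrite eqEproper hC /=; apply/negP => pr.
have aH : a \in hull F Y by apply: (subsetP (sub_hull F Y)).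
have bH : b \in hull F Y by apply: (subsetP (sub_hull F Y)).
case: (hh _ hm pr) => s.
- by move: (subsetP s b bH) => bC1; rewrite (disjointFr dis bC1) in bC2.
- by have := subsetP s a aH => aC2; rewrite (disjointFr dis aC1) in aC2.
Qed.

Lemma hull_meets C C1 C2 Y : splits F C C1 C2 -> hull F Y = C -> Y \subset C ->
  (exists2 a, a \in Y & a \in C1) /\ (exists2 b, b \in Y & b \in C2).
Proof.
move=> hs hY YC; have p1 := splits_proper hs; have p2 := splits_proper (splitsC hs).
case: hs => C1F C2F e dis _.
split.
- case: (boolP [exists a, (a \in Y) && (a \in C1)]) => [/existsP [a /andP [*]]|h]; first by exists a.
  exfalso; have YC2 : Y \subset C2.
    apply/subsetP => y yY; have : y \in C by apply: (subsetP YC).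
    rewrite -e inE => /orP [yC1|//]; by move: h; rewrite negb_exists => /forallP /(_ y); rewrite yY yC1.
  have := hull_sub C2F YC2; rewrite hY => s.
  by move: (proper_sub_trans p2 s); rewrite properE subxx andbF.
- case: (boolP [exists a, (a \in Y) && (a \in C2)]) => [/existsP [a /andP [*]]|h]; first by exists a.
  exfalso; have YC1 : Y \subset C1.
    apply/subsetP => y yY; have : y \in C by apply: (subsetP YC).
    rewrite -e inE => /orP [//|yC2]; by move: h; rewrite negb_exists => /forallP /(_ y); rewrite yY yC2.
  have := hull_sub C1F YC1; rewrite hY => s.
  by move: (proper_sub_trans p1 s); rewrite properE subxx andbF.
Qed.

Lemma splits_neq C C1 C2 : splits F C C1 C2 -> C1 <> C2.
Proof.
case=> C1F _ _ dis _ e; case: (f_ne C1F) => x xC1.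
by have := disjointFr dis xC1; rewrite -e xC1.
Qed.

Lemma sm_refl x : sm F x x.
Proof. by exists [set x]; [apply: f_one|rewrite inE eqxx]. Qed.

Lemma sm_sym x y : sm F x y -> sm F y x.
Proof. by case=> C CF /andP [a b]; exists C; rewrite ?a ?b. Qed.

Lemma sm_trans x y z : sm F x y -> sm F y z -> sm F x z.
Proof.
case=> C CF /andP [xC yC] [D DF /andP [yD zD]].
case: (f_lam CF DF yC yD) => s.
- by exists D => //; rewrite zD (subsetP s _ xC).
- by exists C => //; rewrite xC (subsetP s _ zD).
Qed.

Lemma sm_cover S x : x \in S -> (forall y, y \in S -> sm F x y) -> exists2 D, D \in F & S \subset D.
Proof.
have H : forall n S, #|S| <= n -> x \in S -> (forall y, y \in S -> sm F x y) -> exists2 D, D \in F & S \subset D.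
  elim=> [|n IH] S' c xS h.
    by move: c; rewrite leqn0 cards_eq0 => /eqP e; rewrite e inE in xS.
  case: (boolP (S' \subset [set x])) => sx; first by exists [set x] => //; apply: f_one.
  case/subsetPn: sx => y yS yx.
  have xS' : x \in S' :\ y by rewrite !inE xS andbT; apply: contraNneq yx => ->; rewrite inE.
  have c' : #|S' :\ y| <= n by move: c; rewrite (cardsD1 y S') yS.
  case: (IH _ c' xS') => [z /setD1P [_ zS]|D DF sD]; first by apply: h.
  case: (h y yS) => E EF /andP [xE yE].
  have xD : x \in D by apply: (subsetP sD).
  case: (f_lam DF EF xD xE) => s.
  + exists E => //; apply/subsetP => z zS; case: (boolP (z == y)) => [/eqP -> //|zy].
    by apply: (subsetP s); apply: (subsetP sD); rewrite !inE zy.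
  + exists D => //; apply/subsetP => z zS; case: (boolP (z == y)) => [/eqP -> |zy].
      by apply: (subsetP s).
    by apply: (subsetP sD); rewrite !inE zy.
by move=> xS h; apply: (H #|S|).
Qed.

Lemma proper_irr C : ~ C \proper C.
Proof. by rewrite properE subxx andbF. Qed.

End Forest.

Section Le.
Variables F G : {set {set I}}.
Hypotheses (hF : is_forest F) (hG : is_forest G) (hle : forest_le F G).

Lemma fle_props :
  [/\ (forall C, C \in F -> hull G C \in G),
      (forall C C', C \in F -> C' \in F -> 1 < #|C| -> 1 < #|C'| -> hull G C = hull G C' -> C = C') &
      (forall C C1 C2, C \in F -> splits F C C1 C2 -> hull G C1 \proper hull G C)].
Proof.
case: hle => phi [h1 h2 h3 [h4 h5] h6].
have sub : forall C, C \in F -> C \subset phi C.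
  move=> C CF; apply/subsetP => x xC.
  have := h3 [set x] C (f_one hF x) CF; rewrite sub1set xC h2 => /(_ isT).
  by rewrite sub1set.
have ph : forall n C, #|C| <= n -> C \in F -> phi C = hull G C.
  elim=> [|n IH] C cC CF.
    by case: (f_ne hF CF) => x xC; move: cC; rewrite leqn0 cards_eq0 => /eqP e; rewrite e inE in xC.
  case: (leqP #|C| 1) => c1.
    by case: (f_single hF CF c1) => i ->; rewrite h2 hull_id //; apply: f_one.
  case: (f_split hF CF c1) => C1 [C2 hs].
  have ch1 := splits_child hF CF hs; have ch2 := splits_child hF CF (splitsC hs).
  have ne := splits_neq hF hs.
  have [s1 s2] := splits_sub hs.
  have e1 : phi C1 = hull G C1.
    apply: IH; last by case: hs.
    by rewrite -ltnS; apply: leq_trans cC; apply: proper_card; apply: splits_proper hs.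
  have e2 : phi C2 = hull G C2.
    apply: IH; last by case: hs.
    by rewrite -ltnS; apply: leq_trans cC; apply: proper_card; apply: splits_proper (splitsC hs).
  case: (h6 C C1 C2 ch1 ch2 ne) => _ _ least.
  have hm : hull G C \in G.
    by apply: (hull_mem hG); [exact: (f_ne hF CF)|exists (phi C); [apply: h1|apply: sub]].
  apply/eqP; rewrite eqEsubset; apply/andP; split.
    by apply: least => //; rewrite e1 e2 subUset !hull_mono.
  by apply: hull_sub; [apply: h1|apply: sub].
have ph' : forall C, C \in F -> phi C = hull G C by move=> C CF; apply: (ph #|C|).
split.
- by move=> C CF; rewrite -ph' //; apply: h1.
- by move=> C C' CF C'F c c'; rewrite -!ph' // => e; apply: h5 => //; split.
- move=> C C1 C2 CF hs; have ch1 := splits_child hF CF hs; have ch2 := splits_child hF CF (splitsC hs).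
  have C1F : C1 \in F by case: hs.
  by case: (h6 C C1 C2 ch1 ch2 (splits_neq hF hs)); rewrite -!ph'.
Qed.

Lemma fle_cover C : C \in F -> exists2 D, D \in G & C \subset D.
Proof. by case: fle_props => h _ _ CF; exists (hull G C); [apply: h|apply: sub_hull]. Qed.

Lemma hull_both C C1 C2 Y : C \in F -> splits F C C1 C2 -> Y \subset C ->
  (exists2 a, a \in Y & a \in C1) -> (exists2 b, b \in Y & b \in C2) -> hull G Y = hull G C.
Proof.
move=> CF hs YC [a aY aC1] [b bY bC2].
case: fle_props => hm hinj hpr.
set E := hull G C.
have EG : E \in G by apply: hm.
have [s1 s2] := splits_sub hs.
have CE : C \subset E by apply: sub_hull.
have cE : 1 < #|E| by apply: leq_trans (splits_card hF hs) (subset_leq_card CE).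
case: (f_split hG EG cE) => E1 [E2 hE].
have p1 := hpr C C1 C2 CF hs; have p2 := hpr C C2 C1 CF (splitsC hs).
have C1F : C1 \in F by case: hs.
have C2F : C2 \in F by case: hs.
have hE' := hE; case: hE' => E1G E2G eE disE hhE.
have H1 := hhE _ (hm _ C1F) p1; have H2 := hhE _ (hm _ C2F) p2.
have pE1 := splits_proper hG hE; have pE2 := splits_proper hG (splitsC hE).
have notsame : forall Ej, Ej \in G -> Ej \proper E -> hull G C1 \subset Ej -> hull G C2 \subset Ej -> False.
  move=> Ej EjG pj t1 t2.
  have : E \subset Ej.
    apply: hull_sub => //; case: hs => _ _ <- _ _; rewrite subUset.
    by rewrite (subset_trans (sub_hull G C1) t1) (subset_trans (sub_hull G C2) t2).
  by move=> t; move: (proper_sub_trans pj t); apply: proper_irr.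
have aH : a \in hull G C1 by apply: (subsetP (sub_hull G C1)).
have bH : b \in hull G C2 by apply: (subsetP (sub_hull G C2)).
have YE : Y \subset E by apply: subset_trans YC CE.
case: H1 => t1; case: H2 => t2.
- by exfalso; apply: (notsame E1).
- apply: (hull_split hG hE) => //; [exists a => //; exact: (subsetP t1 _ aH)|exists b => //; exact: (subsetP t2 _ bH)].
- apply: (hull_split hG (splitsC hE)) => //; [exists a => //; exact: (subsetP t1 _ aH)|exists b => //; exact: (subsetP t2 _ bH)].
- by exfalso; apply: (notsame E2).
Qed.

End Le.
End Gen.


Section Tree.
Variable I : finType.
Variable T : {set {set I}}.
Hypothesis hT : is_tree T.
Implicit Types (F G : {set {set I}}) (C S X Y : {set I}).

Lemma Tf : is_forest T. Proof. by case: hT. Qed.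
Lemma Tall : setT \in T. Proof. by case: hT. Qed.

Lemma hullT_mem S : (exists x, x \in S) -> hull T S \in T.
Proof. by move=> h; apply: (hull_mem Tf) => //; exists setT; [apply: Tall|apply: subsetT]. Qed.

Definition lca (x y : I) := hull T [set x; y].

Definition validr (e : I -> I -> Prop) := forall x1 y1 x2 y2, e x1 y1 -> e x2 y2 -> x1 != y1 ->
  lca x1 y1 = lca x2 y2 -> e x1 x2.

Definition smle F G := forall x y, sm F x y -> sm G x y.

Lemma lca_xx x : lca x x = [set x].
Proof. by rewrite /lca setUid hull_id //; exact: (f_one Tf x). Qed.

Lemma lca_mem x y : x \in lca x y /\ y \in lca x y.
Proof. by split; apply: (subsetP (sub_hull T _)); rewrite !inE eqxx ?orbT. Qed.

Lemma lca_neq x1 y1 x2 y2 : x1 != y1 -> lca x1 y1 = lca x2 y2 -> x2 != y2.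
Proof.
move=> ne e; apply/negP => /eqP ex; rewrite ex lca_xx in e.
case: (lca_mem x1 y1) => h1 h2; rewrite e !inE in h1 h2.
by move: ne; rewrite (eqP h1) (eqP h2) eqxx.
Qed.

Section InD.
Variable F : {set {set I}}.
Hypotheses (hF : is_forest F) (hFT : forest_le F T).

Lemma clus x y : sm F x y -> x != y ->
  [/\ hull F [set x; y] \in F, 1 < #|hull F [set x; y]|, x \in hull F [set x; y],
      y \in hull F [set x; y] & lca x y = hull T (hull F [set x; y])].
Proof.
move=> xy ne.
have cov : exists2 D, D \in F & [set x; y] \subset D.
  by case: xy => D DF /andP [xD yD]; exists D => //; rewrite subUset !sub1set xD yD.
have hm : hull F [set x; y] \in F by apply: (hull_mem hF) => //; exists x; rewrite !inE eqxx.
have xH : x \in hull F [set x; y] by apply: (subsetP (sub_hull F _)); rewrite !inE eqxx.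
have yH : y \in hull F [set x; y] by apply: (subsetP (sub_hull F _)); rewrite !inE eqxx orbT.
have c2 : 1 < #|hull F [set x; y]|.
  by apply: leq_trans (subset_leq_card (sub_hull F _)); rewrite cards2 ne.
split => //.
case: (f_split hF hm c2) => C1 [C2 hs].
have [m1 m2] := hull_meets hF hs (erefl _) (sub_hull F _).
by apply: (hull_both hF Tf hFT hm hs (sub_hull F _)).
Qed.

Lemma validF : validr (sm F).
Proof.
move=> x1 y1 x2 y2 h1 h2 ne e.
have ne2 := lca_neq ne e.
case: (clus h1 ne) => m1 c1 a1 _ l1; case: (clus h2 ne2) => m2 c2 a2 _ l2.
case: (fle_props hF Tf hFT) => _ hinj _.
have ee := hinj _ _ m1 m2 c1 c2 (etrans (esym l1) (etrans e l2)).
by exists (hull F [set x1; y1]) => //; rewrite a1 ee a2.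
Qed.

Lemma G6 C c x : C \in F -> c \in C -> sm F x c -> x \in hull T C -> x \in C.
Proof.
move=> CF cC xc xh; case: (boolP (x \in C)) => // xC; exfalso.
set S := x |: C.
have cov : exists2 D, D \in F & S \subset D.
  case: xc => E EF /andP [xE cE]; case: (f_lam hF CF EF cC cE) => s.
    by exists E => //; rewrite subUset sub1set xE s.
  by rewrite (subsetP s _ xE) in xC.
have Dm : hull F S \in F by apply: (hull_mem hF) => //; exists x; rewrite !inE eqxx.
have SD := sub_hull F S.
have CS : C \subset S by apply: subsetUr.
have CD : C \subset hull F S by apply: subset_trans CS SD.
have xD : x \in hull F S by apply: (subsetP SD); rewrite !inE eqxx.
have pCD : C \proper hull F S by apply/properP; split => //; exists x.
have c2 : 1 < #|hull F S|.
  apply: (leq_trans _ (proper_card pCD)); case: (f_ne hF CF) => z zC.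
  by rewrite ltnS card_gt0; apply/set0Pn; exists z.
case: (f_split hF Dm c2) => D1 [D2 hs].
case: (fle_props hF Tf hFT) => _ _ hpr.
have key : forall D1 D2, splits F (hull F S) D1 D2 -> C \subset D1 -> False.
  move=> E1 E2 hE CE1.
  have [s1 s2] := splits_sub hE.
  have xE1 : x \notin E1.
    apply/negP => xE1; have SE1 : S \subset E1 by rewrite subUset sub1set xE1 CE1.
    have E1F : E1 \in F by case: hE.
    have := hull_sub E1F SE1 => t.
    by move: (proper_sub_trans (splits_proper hF hE) t); apply: proper_irr.
  have xE2 : x \in E2.
    by case: hE => _ _ e _ _; move: xD; rewrite -e inE (negbTE xE1).
  set Y := x |: E1.
  have YD : Y \subset hull F S by rewrite subUset sub1set xD s1.
  have hY := hull_both hF Tf hFT Dm hE YD.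
  have e1 : hull T Y = hull T (hull F S).
    apply: hY; first by exists c; rewrite ?inE ?(subsetP CE1 _ cC) ?orbT.
    by exists x; rewrite ?inE ?eqxx.
  have E1F : E1 \in F by case: hE.
  have hm1 : hull T E1 \in T by apply: hullT_mem; exists c; apply: (subsetP CE1).
  have : hull T Y \subset hull T E1.
    apply: hull_sub => //; rewrite subUset sub_hull andbT sub1set.
    by apply: (subsetP (hull_mono T CE1)).
  rewrite e1 => t; move: (proper_sub_trans (hpr _ _ _ Dm hE) t); apply: proper_irr.
case: hs => D1F D2F eD disD hhD.
case: (hhD C CF pCD) => s.
- by apply: (key D1 D2) => //; split.
- by apply: (key D2 D1) => //; apply: splitsC; split.
Qed.

End InD.

Lemma sm_of_le F G : is_forest F -> is_forest G -> forest_le F G -> smle F G.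
Proof.
move=> hF hG hle x y [C CF /andP [xC yC]].
case: (fle_props hF hG hle) => hm _ _.
by exists (hull G C); [apply: hm|rewrite !(subsetP (sub_hull G C))].
Qed.

Section Two.
Variables F G : {set {set I}}.
Hypotheses (hF : is_forest F) (hFT : forest_le F T) (hG : is_forest G) (hGT : forest_le G T).

Lemma cover_sm : smle F G -> forall C, C \in F -> hull G C \in G.
Proof.
move=> h C CF; case: (f_ne hF CF) => x xC.
apply: (hull_mem hG); first by exists x.
by apply: (sm_cover hG xC) => y yC; apply: h; exists C; rewrite ?xC ?yC.
Qed.

Lemma hullTG : smle F G -> forall C, C \in F -> hull T (hull G C) = hull T C.
Proof.
move=> h C CF; have hm := cover_sm h CF.
have CD := sub_hull G C.
case: (leqP #|hull G C| 1) => c1.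
  case: (f_single hG hm c1) => i e; rewrite e.
  case: (f_ne hF CF) => x xC.
  have : C \subset [set i] by rewrite -e.
  rewrite subset1 => /orP [/eqP -> //|/eqP C0]; by rewrite C0 inE in xC.
case: (f_split hG hm c1) => D1 [D2 hs].
have [m1 m2] := hull_meets hG hs (erefl _) CD.
by rewrite (hull_both hG Tf hGT hm hs CD m1 m2).
Qed.

Lemma le_of_sm : smle F G -> forest_le F G.
Proof.
move=> h; case: (fle_props hF Tf hFT) => _ hinj hpr.
exists (hull G); split.
- by apply: cover_sm.
- by move=> i; rewrite hull_id //; apply: (f_one hG).
- by move=> C D _ _; apply: hull_mono.
- split.
  + move=> C [CF c]; split; first by apply: cover_sm.
    by apply: leq_trans c (subset_leq_card (sub_hull G C)).
  + move=> C D [CF c] [DF d] e; apply: hinj => //.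
    by rewrite -(hullTG h CF) -(hullTG h DF) e.
- move=> C C1 C2 ch1 ch2 ne.
  have hs := children_splits hF ch1 ch2 ne.
  have CF : C \in F by case: ch1.
  have [s1 s2] := splits_sub hs.
  have C1F : C1 \in F by case: hs.
  have C2F : C2 \in F by case: hs.
  have pr : forall Cj, Cj \in F -> Cj \subset C -> hull T Cj \proper hull T C -> hull G Cj \proper hull G C.
    move=> Cj CjF sj pj; rewrite properEneq hull_mono // andbT; apply/eqP => e.
    move: pj; rewrite -(hullTG h CjF) -(hullTG h CF) e; apply: proper_irr.
  split.
  + by apply: pr => //; apply: hpr hs.
  + by apply: pr => //; apply: (hpr C C2 C1 CF (splitsC hs)).
  + move=> E EG sE; apply: hull_sub => //.
    case: hs => _ _ <- _ _; apply: subset_trans sE; apply: setUSS; apply: sub_hull.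
Qed.

Lemma sub_of_sm : smle F G -> smle G F -> F \subset G.
Proof.
move=> h h'; apply/subsetP => C CF.
have hm := cover_sm h CF.
suff -> : C = hull G C by [].
apply/eqP; rewrite eqEsubset sub_hull /=; apply/subsetP => x xD.
case: (f_ne hF CF) => c cC.
apply: (G6 hF hFT CF cC).
  apply: h'; exists (hull G C) => //; rewrite xD (subsetP (sub_hull G C)) //.
by rewrite -(hullTG h CF); apply: (subsetP (sub_hull T _)).
Qed.
End Two.

Lemma antisym F G : is_forest F -> forest_le F T -> is_forest G -> forest_le G T ->
  smle F G -> smle G F -> F = G.
Proof.
move=> hF hFT hG hGT h h'; apply/eqP; rewrite eqEsubset.
by rewrite (sub_of_sm hF hFT hG hGT h h') (sub_of_sm hG hGT hF hFT h' h).
Qed.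

End Tree.


Definition asb (P : Prop) : bool := if excluded_middle_informative P then true else false.
Lemma asbP (P : Prop) : reflect P (asb P).
Proof. by rewrite /asb; case: (excluded_middle_informative P) => h; constructor. Qed.

Definition equivr (I : Type) (e : I -> I -> Prop) :=
  [/\ forall x, e x x, forall x y, e x y -> e y x & forall x y z, e x y -> e y z -> e x z].

Lemma dis_sub (I : finType) (A B A' B' : {set I}) : A' \subset A -> B' \subset B ->
  [disjoint A & B] -> [disjoint A' & B'].
Proof. by move=> s1 s2 d; apply: (disjointWl s1); apply: (disjointWr s2). Qed.

Section RC.
Variable I : finType.
Variable T : {set {set I}}.
Hypothesis hT : is_tree T.
Variable e : I -> I -> Prop.
Hypothesis he : equivr e.
Hypothesis hv : validr T e.
Implicit Types (F G : {set {set I}}) (C S X Y : {set I}).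

Definition blk x := [set y | asb (e x y)].
Definition Rset := [set X | [exists C, [exists x, [&& C \in T, x \in C & X == C :&: blk x]]]].

Lemma inblk x y : (y \in blk x) = asb (e x y).
Proof. by rewrite inE. Qed.

Lemma e_refl x : e x x. Proof. by case: he. Qed.
Lemma e_sym x y : e x y -> e y x. Proof. by case: he => _ h _; apply: h. Qed.
Lemma e_trans x y z : e x y -> e y z -> e x z. Proof. by case: he => _ _ h; apply: h. Qed.

Lemma blk_eq x y : e x y -> blk x = blk y.
Proof.
move=> h; apply/setP => z; rewrite !inblk; apply/asbP/asbP => h'.
  by apply: e_trans (e_sym h) h'.
by apply: e_trans h h'.
Qed.

Lemma blk_self x : x \in blk x.
Proof. by rewrite inblk; apply/asbP; apply: e_refl. Qed.

Lemma R_memP X : reflect (exists C x, [/\ C \in T, x \in C & X = C :&: blk x]) (X \in Rset).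
Proof.
rewrite inE; apply: (iffP existsP).
  by case=> C /existsP [x /and3P [CT xC /eqP ->]]; exists C, x.
by case=> C [x [CT xC ->]]; exists C; apply/existsP; exists x; rewrite CT xC eqxx.
Qed.

Lemma R_in C x : C \in T -> x \in C -> C :&: blk x \in Rset.
Proof. by move=> CT xC; apply/R_memP; exists C, x. Qed.

Lemma R_blk X z : X \in Rset -> z \in X -> X \subset blk z /\ exists2 C, C \in T & X = C :&: blk z.
Proof.
case/R_memP => C [x [CT xC ->]] /setIP [zC zb].
rewrite inblk in zb; have ex := blk_eq (asbP _ zb); rewrite ex.
by split; [apply: subsetIr|exists C].
Qed.

Lemma R_ne X : X \in Rset -> exists x, x \in X.
Proof. by case/R_memP => C [x [CT xC ->]]; exists x; rewrite in_setI xC blk_self. Qed.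

Lemma R_form X z : X \in Rset -> z \in X -> X = hull T X :&: blk z.
Proof.
move=> XR zX; case: (R_blk XR zX) => sb [C CT eX].
apply/eqP; rewrite eqEsubset subsetI sub_hull sb /=.
rewrite {2}eX; apply: setSI; apply: hull_sub => //; rewrite eX subsetIl //.
Qed.

Lemma R_forest : is_forest Rset.
Proof.
have Tf := Tf hT.
split.
- by apply/negP => /R_ne [x]; rewrite inE.
- move=> i; have -> : [set i] = [set i] :&: blk i.
    apply/setP => z; rewrite in_setI in_set1; case: (boolP (z == i)) => // /eqP ->.
    by rewrite blk_self.
  by apply: R_in; [apply: (f_one Tf)|rewrite inE].
- move=> X Y /R_memP [C [x [CT xC ->]]] /R_memP [D [y [DT yD ->]]].
  case: (excluded_middle_informative (e x y)) => exy.
    rewrite (blk_eq exy); case: Tf => _ _ h _; case: (h C D CT DT) => s.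
    + by constructor 1; apply: setSI.
    + by constructor 2; apply: setSI.
    + by constructor 3; apply: dis_sub s; apply: subsetIl.
  constructor 3; rewrite -setI_eq0; apply/eqP/setP => z; rewrite !inE.
  apply/negP => /andP [/andP [_ zx] /andP [_ zy]]; apply: exy.
  by apply: (e_trans (elimT (asbP _) zx)); apply: e_sym; apply/asbP.
- move=> X XR c2; case: (R_ne XR) => z zX.
  have eX := R_form XR zX.
  set H := hull T X.
  have HT : H \in T by apply: hullT_mem => //; exists z.
  have cH : 1 < #|H| by apply: leq_trans c2 (subset_leq_card (sub_hull T X)).
  case: (f_split Tf HT cH) => H1 [H2 hs].
  have XH : X \subset H by apply: sub_hull.
  have [[a aX aH1] [b bX bH2]] := hull_meets Tf hs (erefl _) XH.
  have [s1 s2] := splits_sub hs.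
  have ea : e z a by apply/asbP; rewrite -inblk; apply: (subsetP (proj1 (R_blk XR zX))).
  have eb : e z b by apply/asbP; rewrite -inblk; apply: (subsetP (proj1 (R_blk XR zX))).
  have H1T : H1 \in T by case: hs.
  have H2T : H2 \in T by case: hs.
  exists (H1 :&: blk z), (H2 :&: blk z); split.
  + by rewrite (blk_eq ea); apply: R_in.
  + by rewrite (blk_eq eb); apply: R_in.
  + by case: hs => _ _ eH _ _; rewrite -setIUl eH -eX.
  + by case: hs => _ _ _ d _; apply: dis_sub d; apply: subsetIl.
  + move=> Y YR pY; case: (R_ne YR) => y yY.
    have yX : y \in X by apply: (subsetP (proper_sub pY)).
    have ezy : e z y by apply/asbP; rewrite -inblk; apply: (subsetP (proj1 (R_blk XR zX))).
    have eY := R_form YR yY; rewrite -(blk_eq ezy) in eY.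
    have YH : hull T Y \subset H.
      apply: hull_sub => //; apply: subset_trans (proper_sub pY) XH.
    have hYT : hull T Y \in T by apply: hullT_mem => //; exists y.
    have pYH : hull T Y \proper H.
      rewrite properEneq YH andbT; apply/eqP => eq.
      by move: pY; rewrite eY eq -eX; apply: proper_irr.
    case: hs => _ _ _ _ hh; case: (hh _ hYT pYH) => s.
    * by left; rewrite eY; apply: setSI.
    * by right; rewrite eY; apply: setSI.
Qed.


Lemma R_le0 : forest_le (forest0 I) Rset.
Proof.
have hR := R_forest.
exists id; split => //.
- by move=> C /imsetP [i _ ->]; apply: (f_one hR).
- split; first by move=> C [/imsetP [i _ ->]]; rewrite cards1.
  by move=> C D [/imsetP [i _ ->]]; rewrite cards1.
- move=> C C1 C2 [C1F CF p _]; exfalso.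
  case/imsetP: C1F => i _ e1; case/imsetP: CF => j _ e2.
  by move: (proper_card p); rewrite e1 e2 !cards1.
Qed.

Lemma R_leT : forest_le Rset (T).
Proof.
have hR := R_forest; have Tf := Tf hT.
exists (hull T); split.
- by move=> X XR; apply: hullT_mem => //; apply: R_ne.
- by move=> i; rewrite hull_id //; apply: (f_one Tf).
- by move=> C D _ _; apply: hull_mono.
- split.
  + move=> X [XR c]; split; first by apply: hullT_mem => //; apply: R_ne.
    by apply: leq_trans c (subset_leq_card (sub_hull T X)).
  + move=> X Y [XR cX] [YR cY] eH.
    set H := hull T X.
    have HT : H \in T by apply: hullT_mem => //; apply: R_ne.
    have cH : 1 < #|H| by apply: leq_trans cX (subset_leq_card (sub_hull T X)).
    case: (f_split Tf HT cH) => H1 [H2 hs].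
    have [[a aX aH1] [b bX bH2]] := hull_meets Tf hs (erefl _) (sub_hull T X).
    have YH : Y \subset H by rewrite /H eH; apply: sub_hull.
    have [[a' aY aH1'] [b' bY bH2']] := hull_meets Tf hs (esym eH) YH.
    have ab : e a b by apply/asbP; rewrite -inblk; apply: (subsetP (proj1 (R_blk XR aX))).
    have ab' : e a' b' by apply/asbP; rewrite -inblk; apply: (subsetP (proj1 (R_blk YR aY))).
    have dis : [disjoint H1 & H2] by case: hs.
    have neab : a != b by apply/eqP => eab; rewrite -eab in bH2; rewrite (disjointFr dis aH1) in bH2.
    have lab : lca T a b = H.
      apply: (hull_split Tf hs) => //; first by rewrite subUset !sub1set (subsetP (sub_hull T X) a aX) (subsetP (sub_hull T X) b bX).
      + by exists a; rewrite ?inE ?eqxx.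
      + by exists b; rewrite ?inE ?eqxx ?orbT.
    have lab' : lca T a' b' = H.
      apply: (hull_split Tf hs) => //; first by rewrite subUset !sub1set (subsetP YH a' aY) (subsetP YH b' bY).
      + by exists a'; rewrite ?inE ?eqxx.
      + by exists b'; rewrite ?inE ?eqxx ?orbT.
    have eaa := hv ab ab' neab (etrans lab (esym lab')).
    by rewrite (R_form XR aX) (R_form YR aY) -eH (blk_eq eaa).
- move=> X X1 X2 ch1 ch2 ne.
  have hs := children_splits hR ch1 ch2 ne.
  have XR : X \in Rset by case: ch1.
  have pr : forall Xj, Xj \in Rset -> Xj \proper X -> hull T Xj \proper hull T X.
    move=> Xj XjR pj; rewrite properEneq; apply/andP; split; last by apply: hull_mono; apply: proper_sub.
    apply/eqP => eq; case: (R_ne XjR) => z zXj.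
    have zX : z \in X by apply: (subsetP (proper_sub pj)).
    move: pj; rewrite (R_form XjR zXj) (R_form XR zX) eq; apply: proper_irr.
  split.
  + by apply: pr; [case: hs|apply: (splits_proper hR hs)].
  + by apply: pr; [case: hs|apply: (splits_proper hR (splitsC hs))].
  + move=> E ET sE; apply: hull_sub => //.
    case: hs => _ _ <- _ _; apply: subset_trans sE; apply: setUSS; apply: sub_hull.
Qed.

Lemma R_sm x y : sm Rset x y <-> e x y.
Proof.
split.
- case=> X XR /andP [xX yX]; case: (R_blk XR xX) => s _.
  by apply/asbP; rewrite -inblk; apply: (subsetP s).
- move=> h; exists (setT :&: blk x); first by apply: R_in; [apply: (Tall hT)|].
  by rewrite !in_setI !in_setT blk_self inblk; apply/asbP.
Qed.

End RC.


Section Lat.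
Variable I : finType.
Variable T : {set {set I}}.
Hypothesis hT : is_tree T.
Implicit Types (F G : {set {set I}}) (C S X Y : {set I}).

Notation D := (interval0 T).

Lemma D_R e : equivr e -> validr T e -> D (Rset T e).
Proof. by move=> he hv; split; [apply: (R_forest hT he)|apply: (R_le0 hT he)|apply: (R_leT hT he hv)]. Qed.

Lemma sm_equiv F : is_forest F -> equivr (sm F).
Proof. by move=> hF; split; [apply: sm_refl|apply: sm_sym|apply: sm_trans]. Qed.

Lemma le_iff F G : D F -> D G -> (forest_le F G <-> smle F G).
Proof.
case=> hF _ hFT [hG _ hGT]; split; first by apply: sm_of_le.
exact: (le_of_sm hT hF hFT hG hGT).
Qed.

Lemma Dle_anti F G : D F -> D G -> forest_le F G -> forest_le G F -> F = G.
Proof.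
move=> DF DG h h'; have a := proj1 (le_iff DF DG) h; have b := proj1 (le_iff DG DF) h'.
by case: DF DG => hF _ hFT [hG _ hGT]; apply: (antisym hT hF hFT hG hGT).
Qed.

Lemma Dle_refl F : D F -> forest_le F F.
Proof. by move=> DF; apply/(le_iff DF DF). Qed.

Lemma Dle_trans F G H : D F -> D G -> D H -> forest_le F G -> forest_le G H -> forest_le F H.
Proof.
move=> DF DG DH /(le_iff DF DG) a /(le_iff DG DH) b; apply/(le_iff DF DH).
by move=> x y /a /b.
Qed.

Lemma D_valid F : D F -> validr T (sm F).
Proof. by case=> hF _ hFT; apply: (validF hT hF hFT). Qed.

Lemma D_equiv F : D F -> equivr (sm F).
Proof. by case=> hF _ _; apply: sm_equiv. Qed.

Definition mtF F G := Rset T (fun x y => sm F x y /\ sm G x y).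
Definition clo F G := fun x y => forall e', equivr e' -> validr T e' ->
   (forall a b, sm F a b -> e' a b) -> (forall a b, sm G a b -> e' a b) -> e' x y.
Definition jnF F G := Rset T (clo F G).

Lemma mt_equiv F G : D F -> D G -> equivr (fun x y => sm F x y /\ sm G x y).
Proof.
move=> DF DG; case: (D_equiv DF) => r1 s1 t1; case: (D_equiv DG) => r2 s2 t2.
split => [x|x y [a b]|x y z [a b] [c d]]; split; eauto.
Qed.

Lemma mt_valid F G : D F -> D G -> validr T (fun x y => sm F x y /\ sm G x y).
Proof.
move=> DF DG x1 y1 x2 y2 [a b] [c d] ne e; split.
- exact: (D_valid DF a c ne e).
- exact: (D_valid DG b d ne e).
Qed.

Lemma clo_equiv F G : equivr (clo F G).
Proof.
split.
- by move=> x e' [r _ _] *; apply: r.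
- by move=> x y h e' he hv h1 h2; case: (he) => _ s _; apply: s; apply: h.
- by move=> x y z h h' e' he hv h1 h2; case: (he) => _ _ t; apply: (t _ y); [apply: h|apply: h'].
Qed.

Lemma clo_valid F G : validr T (clo F G).
Proof. by move=> x1 y1 x2 y2 h1 h2 ne e e' he hv f g; apply: (hv _ y1 _ y2) => //; [apply: h1|apply: h2]. Qed.

Lemma mtF_D F G : D F -> D G -> D (mtF F G).
Proof. by move=> DF DG; apply: D_R; [apply: mt_equiv|apply: mt_valid]. Qed.

Lemma jnF_D F G : D (jnF F G).
Proof. by apply: D_R; [apply: clo_equiv|apply: clo_valid]. Qed.

Lemma sm_mtF F G x y : D F -> D G -> (sm (mtF F G) x y <-> sm F x y /\ sm G x y).
Proof. by move=> DF DG; exact: (R_sm hT (mt_equiv DF DG) x y). Qed.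

Lemma sm_jnF F G x y : sm (jnF F G) x y <-> clo F G x y.
Proof. exact: (R_sm hT (@clo_equiv F G) x y). Qed.

Lemma mtF_meet F G : D F -> D G -> is_meet D (@forest_le I) F G (mtF F G).
Proof.
move=> DF DG; have DM := mtF_D DF DG; split => //.
- by apply/(le_iff DM DF) => x y /(sm_mtF _ _ DF DG) [].
- by apply/(le_iff DM DG) => x y /(sm_mtF _ _ DF DG) [].
- move=> W DW /(le_iff DW DF) a /(le_iff DW DG) b; apply/(le_iff DW DM) => x y h.
  by apply/(sm_mtF _ _ DF DG); split; [apply: a|apply: b].
Qed.

Lemma jnF_join F G : D F -> D G -> is_join D (@forest_le I) F G (jnF F G).
Proof.
move=> DF DG; have DJ := @jnF_D F G; split => //.
- apply/(le_iff DF DJ) => x y h; apply/sm_jnF => e' he hv f g; exact: f.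
- apply/(le_iff DG DJ) => x y h; apply/sm_jnF => e' he hv f g; exact: g.
- move=> W DW /(le_iff DF DW) a /(le_iff DG DW) b; apply/(le_iff DJ DW) => x y /sm_jnF h.
  by apply: h; [apply: D_equiv|apply: D_valid|exact: a|exact: b].
Qed.

End Lat.


Section Chain.
Variable I : finType.
Variable T : {set {set I}}.
Hypothesis hT : is_tree T.
Implicit Types (F G : {set {set I}}) (C S X Y : {set I}).
Notation D := (interval0 T).

Definition ss := sort (fun A B : {set I} => #|A| <= #|B|) (enum [set C in T | 1 < #|C|]).
Definition cutr k (x y : I) : Prop := x = y \/ exists2 C, C \in take k ss & (x \in C) && (y \in C).
Definition mk k := Rset T (cutr k).

Lemma ss_sorted : sorted (fun A B : {set I} => #|A| <= #|B|) ss.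
Proof. by apply: sort_sorted => A B; apply: leq_total. Qed.

Lemma ss_uniq : uniq ss.
Proof. by rewrite sort_uniq enum_uniq. Qed.

Lemma ss_mem C : (C \in ss) = (C \in T) && (1 < #|C|).
Proof. by rewrite mem_sort mem_enum inE. Qed.

Lemma ss_le i j : i <= j -> j < size ss -> #|nth set0 ss i| <= #|nth set0 ss j|.
Proof.
move=> ij js.
apply: (@sorted_leq_nth _ (fun A B : {set I} => #|A| <= #|B|)) => //.
- by move=> A B C; apply: leq_trans.
- exact: ss_sorted.
- by rewrite inE (leq_ltn_trans ij js).
Qed.

Lemma nth_in_take j k : j < k -> j < size ss -> nth set0 ss j \in take k ss.
Proof.
move=> jk js; rewrite -(nth_take set0 jk); apply: mem_nth.
by rewrite size_take_min leq_min jk js.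
Qed.

Lemma take_mem C k : C \in take k ss -> exists2 j, j < k & j < size ss /\ C = nth set0 ss j.
Proof.
move=> Ct; exists (index C (take k ss)).
  by move: (index_mem C (take k ss)); rewrite Ct size_take_min leq_min => /andP [].
have jl : index C (take k ss) < minn k (size ss) by rewrite -size_take_min index_mem.
move: (jl); rewrite leq_min => /andP [jk js]; split => //.
by rewrite -(nth_take set0 jk) nth_index.
Qed.

Lemma take_T C k : C \in take k ss -> C \in T.
Proof. by move/mem_take; rewrite ss_mem => /andP []. Qed.

Lemma take_succ C k : C \in take k ss -> C \in take k.+1 ss.
Proof. by case/take_mem => j jk [js ->]; apply: nth_in_take => //; apply: ltnW. Qed.

Lemma cut_equiv k : equivr (cutr k).
Proof.
split.
- by move=> x; left.
- by move=> x y [->|[C Ct /andP [a b]]]; [left|right; exists C; rewrite ?a ?b].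
- move=> x y z [->|[C Ct /andP [xC yC]]] //.
  case=> [<-|[C' Ct' /andP [yC' zC']]]; first by right; exists C; rewrite ?xC ?yC.
  have Tf := Tf hT.
  case: (f_lam Tf (take_T Ct) (take_T Ct') yC yC') => s.
  + by right; exists C' => //; rewrite (subsetP s _ xC) zC'.
  + by right; exists C => //; rewrite xC (subsetP s _ zC').
Qed.

Lemma cut_valid k : validr T (cutr k).
Proof.
move=> x1 y1 x2 y2 [e1|[C Ct /andP [x1C y1C]]]; first by rewrite e1 eqxx.
move=> h2 ne e; have ne2 := lca_neq hT ne e.
case: h2 => [e2|[C' Ct' /andP [x2C y2C]]]; first by rewrite e2 eqxx in ne2.
right; exists C' => //; rewrite x2C andbT.
have : lca T x2 y2 \subset C' by apply: hull_sub; [exact: (take_T Ct')|rewrite subUset !sub1set x2C y2C].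
by rewrite -e => /subsetP; apply; case: (lca_mem T x1 y1).
Qed.

Lemma mk_D k : D (mk k).
Proof. by apply: (D_R hT); [apply: cut_equiv|apply: cut_valid]. Qed.

Lemma sm_mk k x y : sm (mk k) x y <-> cutr k x y.
Proof. exact: (R_sm hT (cut_equiv k) x y). Qed.

Lemma mk_mono k : forest_le (mk k) (mk k.+1).
Proof.
apply/(le_iff hT (mk_D k) (mk_D k.+1)) => x y /sm_mk h; apply/sm_mk.
by case: h => [->|[C Ct h]]; [left|right; exists C => //; apply: take_succ].
Qed.

Lemma mk_bot F : D F -> forest_le (mk 0) F.
Proof.
move=> DF; apply/(le_iff hT (mk_D 0) DF) => x y /sm_mk [->|[C]]; last by rewrite take0.
by case: DF => hF _ _; apply: sm_refl.
Qed.

Lemma mk_top F : D F -> forest_le F (mk (size ss)).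
Proof.
move=> DF; apply/(le_iff hT DF (mk_D _)) => x y _; apply/sm_mk.
case: (boolP (x == y)) => [/eqP ->|ne]; first by left.
right; exists setT; rewrite ?in_setT // take_size ss_mem (Tall hT) /=.
by apply: leq_trans (subset_leq_card (subsetT [set x; y])); rewrite cards2 ne.
Qed.


Lemma Ck_T k : k < size ss -> nth set0 ss k \in T /\ 1 < #|nth set0 ss k|.
Proof. by move=> hk; move: (mem_nth set0 hk); rewrite ss_mem => /andP. Qed.

Section Step.
Variable k : nat.
Hypothesis hk : k < size ss.
Let Ck := nth set0 ss k.

Lemma notabove C' : C' \in take k ss -> Ck \subset C' -> False.
Proof.
case/take_mem => j jk [js ->] sub.
have cl : #|nth set0 ss j| <= #|Ck| by apply: ss_le => //; apply: ltnW.
have : Ck == nth set0 ss j by rewrite eqEcard sub cl.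
by rewrite nth_uniq // ?ss_uniq // => /eqP ej; rewrite ej ltnn in jk.
Qed.

Section Child.
Variables C1 C2 : {set I}.
Hypothesis hs : splits T Ck C1 C2.

Lemma block1 p q : p \in C1 -> q \in C1 -> cutr k p q.
Proof.
have Tf := Tf hT.
have C1T : C1 \in T by case: hs.
move=> pC qC; case: (leqP #|C1| 1) => c1.
  case: (f_single Tf C1T c1) => i ei; rewrite ei !inE in pC qC.
  by left; rewrite (eqP pC) (eqP qC).
have C1s : C1 \in ss by rewrite ss_mem C1T c1.
set j := index C1 ss.
have js : j < size ss by rewrite index_mem.
have ej : nth set0 ss j = C1 by rewrite nth_index.
case: (leqP k j) => kj.
  have := ss_le kj js; rewrite ej => h.
  have := proper_card (splits_proper Tf hs); rewrite -/Ck => h'.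
  by move: (leq_trans h' h); rewrite ltnn.
by right; exists C1; rewrite ?pC ?qC // -ej; apply: nth_in_take.
Qed.

Lemma closed1 p x : cutr k p x -> p \in C1 -> x \in C1.
Proof.
have Tf := Tf hT.
have C1T : C1 \in T by case: hs.
have [CkT _] := Ck_T hk.
have [s1 _] := splits_sub hs.
case=> [<-|[C' Ct /andP [pC' xC']]] // pC1.
have C'T := take_T Ct.
case: (f_lam Tf C'T C1T pC' pC1) => s; first by apply: (subsetP s).
have pCk : p \in Ck by apply: (subsetP s1).
case: (f_lam Tf C'T CkT pC' pCk) => s'.
  have p' : C' \proper Ck.
    rewrite properEneq s' andbT; apply/eqP => e.
    by apply: (notabove Ct); rewrite e.
  case: hs => _ _ _ dis hh; case: (hh C' C'T p') => s''.
    by apply: (subsetP s'').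
  by move: (subsetP s'' _ pC'); rewrite (disjointFr dis pC1).
by exfalso; apply: (notabove Ct).
Qed.

Lemma lca12 p q : p \in C1 -> q \in C2 -> lca T p q = Ck.
Proof.
move=> pC qC; have [s1 s2] := splits_sub hs; have [CkT _] := Ck_T hk.
apply: (hull_split (Tf hT) hs) => //.
- by rewrite subUset !sub1set (subsetP s1 _ pC) (subsetP s2 _ qC).
- by exists p; rewrite ?inE ?eqxx.
- by exists q; rewrite ?inE ?eqxx ?orbT.
Qed.

Lemma notcut12 p q : p \in C1 -> q \in C2 -> ~ cutr k p q.
Proof.
move=> pC qC h; have qC1 := closed1 h pC.
by case: hs => _ _ _ dis _; rewrite (disjointFr dis qC1) in qC.
Qed.
End Child.

Lemma cut_succ p q : cutr k.+1 p q <-> cutr k p q \/ (p \in Ck /\ q \in Ck).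
Proof.
rewrite /cutr (take_nth set0 hk); split.
- case=> [->|[C]]; first by left; left.
  rewrite mem_rcons in_cons => /orP [/eqP ->|Ct] /andP [a b]; first by right.
  by left; right; exists C; rewrite ?a ?b.
- case=> [[->|[C Ct /andP [a b]]]|[a b]]; first by left.
  + by right; exists C; rewrite ?mem_rcons ?in_cons ?Ct ?orbT ?a ?b.
  + by right; exists Ck; rewrite ?mem_rcons ?in_cons ?eqxx ?a ?b.
Qed.

Lemma cross C1 C2 p q : splits T Ck C1 C2 -> cutr k.+1 p q -> ~ cutr k p q ->
  (p \in C1 /\ q \in C2) \/ (p \in C2 /\ q \in C1).
Proof.
move=> hs /cut_succ [//|[pC qC]] nc.
have e : C1 :|: C2 = Ck by case: hs.
move: pC qC; rewrite -e !inE => /orP [p1|p2] /orP [q1|q2].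
- by exfalso; apply: nc; apply: (block1 hs).
- by left.
- by right.
- by exfalso; apply: nc; apply: (block1 (splitsC hs)).
Qed.


Lemma ex_split : exists C1 C2, splits T Ck C1 C2.
Proof. by have [CkT c] := Ck_T hk; apply: (f_split (Tf hT) CkT c). Qed.

Lemma lca_sym x y : lca T x y = lca T y x.
Proof. by rewrite /lca setUC. Qed.

Lemma mcov_k F : D F -> forest_le (mk k) F -> forest_le F (mk k.+1) -> F = mk k \/ F = mk k.+1.
Proof.
move=> DF h1 h2.
have hF : is_forest F by case: DF.
have a : forall x y, cutr k x y -> sm F x y.
  by move=> x y c; apply: (proj1 (le_iff hT (mk_D k) DF) h1); apply/sm_mk.
have b : forall x y, sm F x y -> cutr k.+1 x y.
  by move=> x y c; apply/sm_mk; apply: (proj1 (le_iff hT DF (mk_D _)) h2).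
case: ex_split => C1 [C2 hs].
case: (classic (exists x y, sm F x y /\ ~ cutr k x y)) => [[x [y [sxy nc]]]|nex].
- right.
  have [a0 [b0 [a0C b0C sab]]] : exists a0 b0, [/\ a0 \in C1, b0 \in C2 & sm F a0 b0].
    case: (cross hs (b _ _ sxy) nc) => [[p q]|[p q]]; first by exists x, y.
    by exists y, x; split => //; apply: sm_sym.
  apply: (Dle_anti hT DF (mk_D _) h2).
  apply/(le_iff hT (mk_D _) DF) => p q /sm_mk /cut_succ [c|[pC qC]]; first by apply: a.
  have e : C1 :|: C2 = Ck by case: hs.
  have toa : forall z, z \in Ck -> sm F z a0.
    move=> z; rewrite -e inE => /orP [z1|z2]; first by apply: a; apply: (block1 hs).
    by apply: (sm_trans hF (a _ _ (block1 (splitsC hs) z2 b0C))); apply: sm_sym.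
  by apply: (sm_trans hF (toa p pC)); apply: sm_sym => //; apply: toa.
- left; apply: (Dle_anti hT DF (mk_D k)) => //.
  apply/(le_iff hT DF (mk_D _)) => x y sxy; apply/sm_mk; apply: NNPP => nc.
  by apply: nex; exists x, y.
Qed.

Lemma noJ F x y : D F -> forest_le F (mk k) -> sm F x y -> x != y -> lca T x y = Ck -> False.
Proof.
move=> DF hle sxy ne e.
have : cutr k x y by apply/sm_mk; apply: (proj1 (le_iff hT DF (mk_D _)) hle).
case=> [exy|[C' Ct /andP [xC yC]]]; first by rewrite exy eqxx in ne.
apply: (notabove Ct); rewrite -e; apply: hull_sub; first exact: (take_T Ct).
by rewrite subUset !sub1set xC yC.
Qed.

Lemma H1_k Yf Tt : D Yf -> D Tt -> forest_le Yf (mk k) -> forest_le Tt (mk k.+1) ->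
  forest_le (mtF T (mk k) (jnF T Yf Tt)) (jnF T Yf (mtF T (mk k) Tt)).
Proof.
move=> DY DTt hY hTt.
have Dk := mk_D k.
have DM := mtF_D hT Dk DTt.
set M := mtF T (mk k) Tt.
set J := jnF T Yf M.
have DJ : D J by apply: jnF_D.
have hJ : is_forest J by case: DJ.
have hTf : is_forest Tt by case: DTt.
case: (jnF_join hT DY DM) => _ YJ MJ Jlub.
case: (mtF_meet hT Dk DTt) => _ Mk MTt _.
have JK : forest_le J (mk k) by apply: Jlub.
have smY : forall x y, sm Yf x y -> sm J x y by apply/(le_iff hT DY DJ).
have smMJ : forall x y, cutr k x y -> sm Tt x y -> sm J x y.
  move=> x y c t; apply: (proj1 (le_iff hT DM DJ) MJ).
  by apply/(sm_mtF hT _ _ Dk DTt); split => //; apply/sm_mk.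
have smJk : forall x y, sm J x y -> cutr k x y.
  by move=> x y h; apply/sm_mk; apply: (proj1 (le_iff hT DJ Dk) JK).
have smTt : forall x y, sm Tt x y -> cutr k.+1 x y.
  by move=> x y h; apply/sm_mk; apply: (proj1 (le_iff hT DTt (mk_D _)) hTt).
have tJ := sm_trans hJ; have sJ := @sm_sym I J.
case: ex_split => C1 [C2 hs].
have JC1 : forall x a, sm J x a -> a \in C1 -> x \in C1.
  move=> x a h aC; apply: (closed1 hs _ aC); case: (cut_equiv k) => _ sy _; apply: sy; exact: smJk.
have JC2 : forall x a, sm J x a -> a \in C2 -> x \in C2.
  move=> x a h aC; apply: (closed1 (splitsC hs) _ aC); case: (cut_equiv k) => _ sy _; apply: sy; exact: smJk.
have DJlb : forall W, D W -> forest_le Yf W -> forest_le Tt W -> forest_le (jnF T Yf Tt) W.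
  by case: (jnF_join hT DY DTt) => _ _ _.
have DYT := jnF_D hT Yf Tt.
have mlow : forest_le (mtF T (mk k) (jnF T Yf Tt)) (jnF T Yf Tt).
  by case: (mtF_meet hT Dk DYT).
have DMY := mtF_D hT Dk DYT.
case: (classic (exists a0 b0, [/\ a0 \in C1, b0 \in C2 & sm Tt a0 b0])) => [[a0 [b0 [a0C b0C sab]]]|nb].
- pose eu := fun x z => sm J x z \/ (sm J x a0 /\ sm J z b0) \/ (sm J x b0 /\ sm J z a0).
  have nJab : ~ sm J a0 b0 by move=> h; apply: (notcut12 hs a0C b0C); apply: smJk.
  have equ : equivr eu.
    split.
    + by move=> x; left; apply: sm_refl.
    + by move=> x y [h|[[h1 h2]|[h1 h2]]]; [left; apply: sJ|right; right|right; left].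
    + move=> x y z [h|[[h1 h2]|[h1 h2]]] [h'|[[h1' h2']|[h1' h2']]].
      * by left; exact: (tJ _ _ _ h h').
      * by right; left; split; [exact: (tJ _ _ _ h h1')|exact: h2'].
      * by right; right; split; [exact: (tJ _ _ _ h h1')|exact: h2'].
      * by right; left; split; [exact: h1|exact: (tJ _ _ _ (sJ _ _ h') h2)].
      * by exfalso; apply: nJab; exact: (tJ _ _ _ (sJ _ _ h1') h2).
      * by left; exact: (tJ _ _ _ h1 (sJ _ _ h2')).
      * by right; right; split; [exact: h1|exact: (tJ _ _ _ (sJ _ _ h') h2)].
      * by left; exact: (tJ _ _ _ h1 (sJ _ _ h2')).
      * by exfalso; apply: nJab; exact: (tJ _ _ _ (sJ _ _ h2) h1').
  have val : validr T eu.
    move=> x1 y1 x2 y2 h1 h2 ne e.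
    have ne2 := lca_neq hT ne e.
    have l12 : forall x y, x \in C1 -> y \in C2 -> lca T x y = Ck by move=> *; apply: (lca12 hs).
    have l21 : forall x y, x \in C2 -> y \in C1 -> lca T x y = Ck.
      by move=> x y *; rewrite lca_sym; apply: (lca12 hs).
    case: h1 => [h1|[[h1 h1']|[h1 h1']]]; case: h2 => [h2|[[h2 h2']|[h2 h2']]].
    * by left; apply: (D_valid hT DJ h1 h2 ne e).
    * by exfalso; apply: (noJ DJ JK h1 ne); rewrite e; apply: l12; [apply: (JC1 _ a0)|apply: (JC2 _ b0)].
    * by exfalso; apply: (noJ DJ JK h1 ne); rewrite e; apply: l21; [apply: (JC2 _ b0)|apply: (JC1 _ a0)].
    * by exfalso; apply: (noJ DJ JK h2 ne2); rewrite -e; apply: l12; [apply: (JC1 _ a0)|apply: (JC2 _ b0)].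
    * by left; exact: (tJ _ _ _ h1 (sJ _ _ h2)).
    * by right; left; split.
    * by exfalso; apply: (noJ DJ JK h2 ne2); rewrite -e; apply: l21; [apply: (JC2 _ b0)|apply: (JC1 _ a0)].
    * by right; right; split.
    * by left; exact: (tJ _ _ _ h1 (sJ _ _ h2)).
  have DU := D_R hT equ val.
  set U := Rset T eu.
  have smU : forall x y, eu x y -> sm U x y by move=> x y h; apply/(R_sm hT equ).
  have YU : forest_le Yf U by apply/(le_iff hT DY DU) => x y h; apply: smU; left; apply: smY.
  have vT := D_valid hT DTt.
  have c12 : forall p q, sm Tt p q -> p \in C1 -> q \in C2 -> eu p q.
    move=> p q h pC qC.
    have npq : p != q.
      apply/eqP => epq; case: hs => _ _ _ dis _; rewrite epq in pC.
      by rewrite (disjointFr dis pC) in qC.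
    have nqp : q != p by rewrite eq_sym.
    have h1 : sm Tt p a0 := vT p q a0 b0 h sab npq (etrans (lca12 hs pC qC) (esym (lca12 hs a0C b0C))).
    have h2 : sm Tt q b0 := vT q p b0 a0 (sm_sym h) (sm_sym sab) nqp
      (etrans (etrans (lca_sym q p) (lca12 hs pC qC)) (esym (etrans (lca_sym b0 a0) (lca12 hs a0C b0C)))).
    right; left; split; apply: smMJ => //.
    + exact: (block1 hs pC a0C).
    + exact: (block1 (splitsC hs) qC b0C).
  have TtU : forest_le Tt U.
    apply/(le_iff hT DTt DU) => p q h; apply: smU.
    case: (classic (cutr k p q)) => c; first by left; apply: smMJ.
    case: (cross hs (smTt _ _ h) c) => [[pC qC]|[pC qC]]; first by apply: c12.
    by case: equ => _ sy _; apply: sy; apply: c12 => //; apply: sm_sym.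
  have JU := DJlb U DU YU TtU.
  have DMU := mtF_D hT Dk DU.
  have st1 : forest_le (mtF T (mk k) (jnF T Yf Tt)) (mtF T (mk k) U).
    case: (mtF_meet hT Dk DYT) => _ l1 l2 _.
    case: (mtF_meet hT Dk DU) => _ _ _ glb.
    exact: (glb _ DMY l1 (Dle_trans hT DMY DYT DU l2 JU)).
  have st2 : forest_le (mtF T (mk k) U) J.
    apply/(le_iff hT DMU DJ) => x z /(sm_mtF hT _ _ Dk DU) [/sm_mk c /(R_sm hT equ) [h|[[h1 h2]|[h1 h2]]]].
    + exact: h.
    + by exfalso; apply: (notcut12 hs (JC1 _ _ h1 a0C) (JC2 _ _ h2 b0C)).
    + exfalso; apply: (notcut12 hs (JC1 _ _ h2 a0C) (JC2 _ _ h1 b0C)).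
      by case: (cut_equiv k) => _ sy _; apply: sy.
  exact: (Dle_trans hT DMY DMU DJ st1 st2).
- have TtJ : forest_le Tt J.
    apply/(le_iff hT DTt DJ) => p q h.
    case: (classic (cutr k p q)) => c; first by apply: smMJ.
    case: (cross hs (smTt _ _ h) c) => [[pC qC]|[pC qC]]; exfalso; apply: nb.
      by exists p, q.
    by exists q, p; split => //; apply: sm_sym.
  exact: (Dle_trans hT DMY DYT DJ mlow (DJlb J DJ YJ TtJ)).
Qed.

Lemma H2_k W Z : D W -> D Z -> forest_le W Z -> forest_le Z (mk k.+1) -> ~ forest_le W (mk k) ->
  forest_le Z (jnF T W (mtF T Z (mk k))).
Proof.
move=> DW DZ hWZ hZ nW.
have Dk := mk_D k.
have DM := mtF_D hT DZ Dk.
set M := mtF T Z (mk k).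
set J := jnF T W M.
have DJ : D J by apply: jnF_D.
have hJ : is_forest J by case: DJ.
have hZf : is_forest Z by case: DZ.
case: (jnF_join hT DW DM) => _ WJ MJ _.
have smW : forall x y, sm W x y -> sm J x y by apply/(le_iff hT DW DJ).
have smWZ : forall x y, sm W x y -> sm Z x y by apply/(le_iff hT DW DZ).
have smMJ : forall x y, cutr k x y -> sm Z x y -> sm J x y.
  move=> x y c t; apply: (proj1 (le_iff hT DM DJ) MJ).
  by apply/(sm_mtF hT _ _ DZ Dk); split => //; apply/sm_mk.
have smZ : forall x y, sm Z x y -> cutr k.+1 x y.
  by move=> x y h; apply/sm_mk; apply: (proj1 (le_iff hT DZ (mk_D _)) hZ).
case: ex_split => C1 [C2 hs].
have [a [b [sab nab]]] : exists a b, sm W a b /\ ~ cutr k a b.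
  apply: NNPP => h; apply: nW; apply/(le_iff hT DW Dk) => x y sxy; apply/sm_mk.
  by apply: NNPP => nc; apply: h; exists x, y.
have [a0 [b0 [a0C b0C sab0]]] : exists a0 b0, [/\ a0 \in C1, b0 \in C2 & sm W a0 b0].
  case: (cross hs (smZ _ _ (smWZ _ _ sab)) nab) => [[p q]|[p q]]; first by exists a, b.
  by exists b, a; split; [exact: q|exact: p|exact: (sm_sym sab)].
have vZ := D_valid hT DZ.
have c12 : forall p q, sm Z p q -> p \in C1 -> q \in C2 -> sm J p q.
  move=> p q h pC qC.
  have npq : p != q.
    apply/eqP => epq; case: hs => _ _ _ dis _; rewrite epq in pC.
    by rewrite (disjointFr dis pC) in qC.
  have nqp : q != p by rewrite eq_sym.
  have zab := smWZ _ _ sab0.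
  have h1 : sm Z p a0 := vZ p q a0 b0 h zab npq (etrans (lca12 hs pC qC) (esym (lca12 hs a0C b0C))).
  have h2 : sm Z q b0 := vZ q p b0 a0 (sm_sym h) (sm_sym zab) nqp
    (etrans (etrans (lca_sym q p) (lca12 hs pC qC)) (esym (etrans (lca_sym b0 a0) (lca12 hs a0C b0C)))).
  apply: (sm_trans hJ (smMJ _ _ (block1 hs pC a0C) h1)).
  apply: (sm_trans hJ (smW _ _ sab0)); apply: sm_sym => //.
  exact: (smMJ _ _ (block1 (splitsC hs) qC b0C) h2).
apply/(le_iff hT DZ DJ) => p q h.
case: (classic (cutr k p q)) => c; first by apply: smMJ.
case: (cross hs (smZ _ _ h) c) => [[pC qC]|[pC qC]]; first by apply: c12.
by apply: sm_sym => //; apply: c12 => //; apply: sm_sym.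
Qed.

End Step.
End Chain.

Theorem corollary4p5 (I : finType) (T : {set {set I}}) :
  is_tree T -> supersolvable (interval0 T) (@forest_le I).
Proof.
move=> hT.
apply: (@abs_ss _ (interval0 T) (@forest_le I) (Dle_refl hT) (fun x y Dx Dy => Dle_anti hT Dx Dy)
  (Dle_trans hT) (jnF T) (mtF T) (jnF_join hT) (mtF_meet hT) (mk T) (size (ss T))
  (mk_D hT) (mk_bot hT) (mk_top hT) (mk_mono hT)).
- by move=> i x hi Dx h1 h2; apply: (mcov_k hT hi Dx h1 h2).
- by move=> i y t hi Dy Dt hy ht; apply: (H1_k hT hi Dy Dt hy ht).
- by move=> i w z hi Dw Dz hwz hz nw; apply: (H2_k hT hi Dw Dz hwz hz nw).
Qed.
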